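(* Let $n\geq 3$, $2\leq p<n$, $-\infty<\alpha<\frac{n-p}{p}$, let $b\in\mathbb{R}$ and set $\delta_1=n-p-\alpha p-\frac{n+pb}{p}$, $\delta_2=n-p-\alpha p-\frac{bp}{p-1}$. Let $|x|$ be the Euclidean norm and $\nabla$ the standard gradient on $\mathbb{R}^n$. Then for every $f\in C_0^\infty(\mathbb{R}^n\setminus\{0\})$, $$\int_{\mathbb{R}^n}\frac{|\nabla f(x)|^p}{|x|^{\alpha p}}dx-\left(\frac{n-p-\alpha p}{p}\right)^p\int_{\mathbb{R}^n}\frac{|f(x)|^p}{|x|^{(\alpha+1)p}}dx\geq C_p\frac{\left(\int_{\mathbb{R}^n}|f(x)|^p|x|^{\delta_1}dx\right)^p}{\left(\int_{\mathbb{R}^n}|f(x)|^p|x|^{\delta_2}dx\right)^{p-1}},$$ where $C_p=c_p\left|\frac{n(p-1)-pb}{p^2}\right|^p$ and $c_p=\min_{0<t\leq 1/2}\left((1-t)^p-t^p+pt^{p-1}\right)$. *)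

(* Defs.v *)
(* classical reals.  R^n is modelled by points x : nat -> R of
   which only the first n coordinates x 0, ..., x (n-1) are used. *)
From Stdlib Require Import Reals Lra Lia List ClassicalEpsilon.
Open Scope R_scope.

Fixpoint sumn (n : nat) (g : nat -> R) : R :=
  match n with O => 0 | S k => sumn k g + g k end.

Definition normn (n : nat) (x : nat -> R) : R := sqrt (sumn n (fun i => x i ^ 2)).
Definition distn (n : nat) (x y : nat -> R) : R := normn n (fun i => y i - x i).

Definition upd (x : nat -> R) (k : nat) (t : R) : nat -> R :=
  fun i => if Nat.eqb i k then t else x i.

(* real power x^y for x >= 0, with the convention 0^y = 0 *)
Definition rpow (x y : R) : R := if Rle_dec x 0 then 0 else Rpower x y.

(* integral over R of a function vanishing outside a bounded interval:
   the Riemann integral over a symmetric interval outside of which g vanishes *)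
Definition is_Rint (g : R -> R) (I : R) : Prop :=
  exists M, 0 < M /\ (forall t, M < Rabs t -> g t = 0) /\
    exists pr : Riemann_integrable g (- M) M, RiemannInt pr = I.
Definition Rint (g : R -> R) : R := epsilon (inhabits 0) (is_Rint g).

Fixpoint integ (k : nat) (F : (nat -> R) -> R) (x : nat -> R) : R :=
  match k with
  | O => F x
  | S k' => Rint (fun t => integ k' F (upd x k' t))
  end.
Definition integRn (n : nat) (F : (nat -> R) -> R) : R := integ n F (fun _ => 0).

Definition partial (i : nat) (f : (nat -> R) -> R) (x : nat -> R) : R :=
  epsilon (inhabits 0) (fun L => derivable_pt_lim (fun t => f (upd x i t)) (x i) L).
Definition partial_exists (i : nat) (f : (nat -> R) -> R) : Prop :=
  forall x, exists L, derivable_pt_lim (fun t => f (upd x i t)) (x i) L.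
Definition iter_partial (l : list nat) (f : (nat -> R) -> R) : (nat -> R) -> R :=
  fold_right partial f l.

Definition contn (n : nat) (g : (nat -> R) -> R) : Prop :=
  forall x eps, 0 < eps -> exists d, 0 < d /\
    forall y, distn n x y < d -> Rabs (g y - g x) < eps.

Definition smoothn (n : nat) (f : (nat -> R) -> R) : Prop :=
  forall l : list nat, Forall (fun i => (i < n)%nat) l ->
    contn n (iter_partial l f) /\
    forall i, (i < n)%nat -> partial_exists i (iter_partial l f).

(* C_0^infinity(R^n \ {0}): smooth with support in an annulus r <= |x| <= R0 *)
Definition C0inf_punct (n : nat) (f : (nat -> R) -> R) : Prop :=
  smoothn n f /\
  exists r R0, 0 < r /\ forall x, (normn n x < r \/ R0 < normn n x) -> f x = 0.

Definition gradnorm (n : nat) (f : (nat -> R) -> R) (x : nat -> R) : R :=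
  sqrt (sumn n (fun i => partial i f x ^ 2)).

Definition cp_fun (p t : R) : R :=
  Rpower (1 - t) p - Rpower t p + p * Rpower t (p - 1).
Definition is_cp (p c : R) : Prop :=
  (exists t0, 0 < t0 <= 1/2 /\ cp_fun p t0 = c) /\
  (forall t, 0 < t <= 1/2 -> c <= cp_fun p t).

(* Main.v *)
Require Import Defs.
From Stdlib Require Import Reals Lra Lia Psatz List ClassicalEpsilon FunctionalExtensionality Classical.
From Coquelicot Require Import Coquelicot.
Require Import Defs.
Open Scope R_scope.

Lemma rpow_pos_eq x q : 0 < x -> rpow x q = Rpower x q.
Proof. intros H; unfold rpow; destruct (Rle_dec x 0); [lra|auto]. Qed.
Lemma rpow_nonpos x q : x <= 0 -> rpow x q = 0.
Proof. intros H; unfold rpow; destruct (Rle_dec x 0); [auto|lra]. Qed.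
Lemma Rpower_pos x q : 0 < Rpower x q.
Proof. unfold Rpower; apply exp_pos. Qed.
Lemma rpow_ge0 x q : 0 <= rpow x q.
Proof. unfold rpow; destruct (Rle_dec x 0); [lra|left; apply Rpower_pos]. Qed.
Lemma rpow_gt0 x q : 0 < x -> 0 < rpow x q.
Proof. intros; rewrite rpow_pos_eq; auto; apply Rpower_pos. Qed.

Lemma rpow_mult a b q : 0 <= a -> 0 <= b -> rpow (a*b) q = rpow a q * rpow b q.
Proof.
  intros Ha Hb. destruct Ha as [Ha|Ha]; [destruct Hb as [Hb|Hb]|].
  - rewrite !rpow_pos_eq; try nra. now rewrite Rpower_mult_distr.
  - subst. rewrite Rmult_0_r, !(rpow_nonpos 0); lra.
  - subst. rewrite Rmult_0_l, !(rpow_nonpos 0); lra.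
Qed.
Lemma rpow_plus a q1 q2 : 0 <= a -> rpow a (q1+q2) = rpow a q1 * rpow a q2.
Proof.
  intros [Ha|Ha].
  - rewrite !rpow_pos_eq; auto. now rewrite Rpower_plus.
  - subst. rewrite !(rpow_nonpos 0); lra.
Qed.
Lemma rpow_rpow a q1 q2 : 0 <= a -> rpow (rpow a q1) q2 = rpow a (q1*q2).
Proof.
  intros [Ha|Ha].
  - rewrite (rpow_pos_eq a q1), !rpow_pos_eq; auto. now rewrite Rpower_mult.
    apply Rpower_pos.
  - subst. rewrite !(rpow_nonpos 0); lra.
Qed.
Lemma rpow_opp a q : 0 <= a -> rpow a (-q) = / rpow a q.
Proof.
  intros [Ha|Ha].
  - rewrite !rpow_pos_eq; auto. now rewrite Rpower_Ropp.
  - subst. rewrite !(rpow_nonpos 0); try lra. now rewrite Rinv_0.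
Qed.
Lemma rpow_1 a : 0 <= a -> rpow a 1 = a.
Proof.
  intros [Ha|Ha]. rewrite rpow_pos_eq; auto; now rewrite Rpower_1.
  subst; now rewrite rpow_nonpos by lra.
Qed.
Lemma rpow_2 a : 0 <= a -> rpow a 2 = a * a.
Proof.
  intros Ha. replace 2 with (1+1) by lra. rewrite rpow_plus, rpow_1; auto.
Qed.
Lemma rpow_inv a q : 0 <= a -> rpow (/ a) q = / rpow a q.
Proof.
  intros [Ha|Ha].
  - rewrite !rpow_pos_eq; auto. 2: now apply Rinv_0_lt_compat.
    unfold Rpower. rewrite ln_Rinv by auto. rewrite <- exp_Ropp. f_equal; ring.
  - subst. rewrite Rinv_0, rpow_nonpos by lra. now rewrite Rinv_0.
Qed.
Lemma rpow_le_base a b q : 0 < q -> 0 <= a <= b -> rpow a q <= rpow b q.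
Proof.
  intros Hq [[Ha|Ha] Hab].
  - rewrite !rpow_pos_eq by lra. apply Rle_Rpower_l; lra.
  - subst. rewrite (rpow_nonpos 0) by lra. apply rpow_ge0.
Qed.
Lemma rpow_lt_base a b q : 0 < q -> 0 <= a < b -> rpow a q < rpow b q.
Proof.
  intros Hq [[Ha|Ha] Hab].
  - rewrite !rpow_pos_eq by lra. apply Rlt_Rpower_l; lra.
  - subst. rewrite (rpow_nonpos 0) by lra. apply rpow_gt0; lra.
Qed.
Lemma rpow_one q : rpow 1 q = 1.
Proof. rewrite rpow_pos_eq by lra. unfold Rpower. rewrite ln_1, Rmult_0_r. apply exp_0. Qed.
Lemma rpow_le1 a q : 0 <= a <= 1 -> 0 <= q -> rpow a q <= 1.
Proof.
  intros Ha Hq. destruct (Req_dec q 0).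
  - subst. destruct (Req_dec a 0). subst; rewrite rpow_nonpos; lra.
    rewrite rpow_pos_eq by lra. rewrite Rpower_O; lra.
  - rewrite <- (rpow_one q). apply rpow_le_base; lra.
Qed.
Lemma rpow_exp_anti a q1 q2 : 0 <= a <= 1 -> q1 <= q2 -> 0 < q1 -> rpow a q2 <= rpow a q1.
Proof.
  intros Ha Hq Hq1. destruct (Req_dec a 0). subst; rewrite !rpow_nonpos; lra.
  replace q2 with (q1 + (q2 - q1)) by ring. rewrite rpow_plus by lra.
  pose proof (rpow_le1 a (q2-q1) Ha ltac:(lra)). pose proof (rpow_ge0 a q1). nra.
Qed.

Lemma rpow_small q eps : 0 < q -> 0 < eps -> exists d, 0 < d /\ forall a, 0 <= a < d -> rpow a q < eps.
Proof.
  intros Hq He. exists (rpow eps (/q)). split. apply rpow_gt0; auto.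
  intros a Ha. apply Rlt_le_trans with (rpow (rpow eps (/q)) q).
  apply rpow_lt_base; auto. rewrite rpow_rpow by lra. rewrite Rinv_l by lra.
  rewrite rpow_1; lra.
Qed.


Lemma derivable_rpow_pos x q : 0 < x -> derivable_pt_lim (fun a => rpow a q) x (q * Rpower x (q-1)).
Proof.
  intros Hx. apply (is_derive_Reals (fun a => rpow a q)).
  apply is_derive_ext_loc with (fun a => Rpower a q).
  - exists (mkposreal x Hx). intros y Hy. simpl in Hy.
    unfold ball in Hy; simpl in Hy; unfold AbsRing_ball, abs, minus, plus, opp in Hy; simpl in Hy.
    rewrite rpow_pos_eq; auto. apply Rabs_def2 in Hy; lra.
  - apply is_derive_Reals. now apply derivable_pt_lim_power.
Qed.

Lemma cont_rpow_pos x q : 0 < x -> continuity_pt (fun a => rpow a q) x.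
Proof.
  intros Hx. eapply derivable_continuous_pt. exists (q * Rpower x (q-1)).
  now apply derivable_rpow_pos.
Qed.

Lemma cont_pt_intro f x :
  (forall eps, 0 < eps -> exists d, 0 < d /\ forall y, Rabs (y - x) < d -> Rabs (f y - f x) < eps) ->
  continuity_pt f x.
Proof.
  intros H eps He. destruct (H eps He) as [d [Hd Hy]]. exists d; split; auto.
  intros y [_ Hyx]. apply Hy. exact Hyx.
Qed.
Lemma cont_pt_elim f x : continuity_pt f x ->
  forall eps, 0 < eps -> exists d, 0 < d /\ forall y, Rabs (y - x) < d -> Rabs (f y - f x) < eps.
Proof.
  intros H eps He. destruct (H eps He) as [d [Hd Hy]]. exists d; split; auto.
  intros y Hyx. destruct (Req_dec y x). subst. rewrite Rminus_diag, Rabs_R0; lra.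
  apply Hy. split; [split; [exact I|congruence]|exact Hyx].
Qed.

Lemma cont_rpow_abs q u : 0 < q -> continuity_pt (fun a => rpow (Rabs a) q) u.
Proof.
  intros Hq. destruct (Req_dec u 0).
  - subst. apply cont_pt_intro. intros eps He. destruct (rpow_small q eps Hq He) as [d [Hd Hs]].
    exists d; split; auto. intros y Hy. cbv beta. rewrite Rabs_R0, (rpow_nonpos 0) by lra.
    rewrite Rminus_0_r in Hy; rewrite Rminus_0_r. rewrite Rabs_pos_eq by apply rpow_ge0.
    apply Hs. split; [apply Rabs_pos|auto].
  - apply (continuity_pt_comp Rabs (fun a => rpow a q)). apply Rcontinuity_abs.
    apply cont_rpow_pos. now apply Rabs_pos_lt.
Qed.

Definition psi (p u : R) : R := u * rpow (Rabs u) (p - 2).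

Lemma abs_psi p u : Rabs (psi p u) = rpow (Rabs u) (p - 1).
Proof.
  unfold psi. rewrite Rabs_mult, (Rabs_pos_eq (rpow _ _)) by apply rpow_ge0.
  replace (p-1) with (1 + (p-2)) by ring. rewrite rpow_plus, rpow_1 by apply Rabs_pos. auto.
Qed.
Lemma psi_mul_self p u : psi p u * u = rpow (Rabs u) p.
Proof.
  unfold psi. replace p with (2 + (p-2)) at 2 by ring. rewrite rpow_plus, rpow_2 by apply Rabs_pos.
  replace (Rabs u * Rabs u) with (u*u). ring.
  rewrite <- Rabs_mult. rewrite Rabs_pos_eq; auto. nra.
Qed.

Lemma cont_psi p u : 1 < p -> continuity_pt (psi p) u.
Proof.
  intros Hp. destruct (Req_dec u 0).
  - subst. apply cont_pt_intro. intros eps He. destruct (rpow_small (p-1) eps ltac:(lra) He) as [d [Hd Hs]].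
    exists d; split; auto. intros y Hy. cbv beta. unfold psi at 2. rewrite Rmult_0_l, Rminus_0_r.
    rewrite abs_psi. rewrite Rminus_0_r in Hy. apply Hs. split; [apply Rabs_pos|auto].
  - unfold psi. apply continuity_pt_mult. apply continuity_pt_id.
    apply (continuity_pt_comp Rabs (fun a => rpow a (p-2))). apply Rcontinuity_abs.
    apply cont_rpow_pos. now apply Rabs_pos_lt.
Qed.

Lemma deriv_rpow_abs p u : 1 < p -> derivable_pt_lim (fun a => rpow (Rabs a) p) u (p * psi p u).
Proof.
  intros Hp. destruct (Rtotal_order u 0) as [Hu|[Hu|Hu]].
  - apply (is_derive_Reals (fun a => rpow (Rabs a) p)).
    apply is_derive_ext_loc with (fun a => rpow (- a) p).
    + exists (mkposreal (-u) ltac:(simpl; lra)). intros y Hy.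
      unfold ball in Hy; simpl in Hy; unfold AbsRing_ball, abs, minus, plus, opp in Hy; simpl in Hy.
      apply Rabs_def2 in Hy. rewrite Rabs_left by lra. auto.
    + apply is_derive_Reals.
      replace (p * psi p u) with ((p * Rpower (-u) (p-1)) * (-1)).
      apply (derivable_pt_lim_comp (fun a => - a) (fun a => rpow a p)).
      apply derivable_pt_lim_opp, derivable_pt_lim_id. apply derivable_rpow_pos; lra.
      unfold psi. rewrite Rabs_left by lra. rewrite rpow_pos_eq by lra.
      replace (p-1) with (1 + (p-2)) by ring. rewrite Rpower_plus, Rpower_1 by lra. ring.
  - subst. intros eps He. destruct (rpow_small (p-1) eps ltac:(lra) He) as [d [Hd Hs]].
    exists (mkposreal d Hd). intros h Hh Hhd. simpl in Hhd.
    rewrite Rplus_0_l, Rabs_R0, (rpow_nonpos 0) by lra. unfold psi. rewrite Rmult_0_l, !Rmult_0_r, !Rminus_0_r.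
    unfold Rdiv. rewrite Rabs_mult, Rabs_pos_eq by apply rpow_ge0. rewrite Rabs_inv.
    replace p with (1 + (p-1)) at 1 by ring. rewrite rpow_plus, rpow_1 by apply Rabs_pos.
    replace (Rabs h * rpow (Rabs h) (p - 1) * / Rabs h) with (rpow (Rabs h) (p-1)).
    apply Hs. split; [apply Rabs_pos|auto]. field. now apply Rabs_no_R0.
  - apply (is_derive_Reals (fun a => rpow (Rabs a) p)).
    apply is_derive_ext_loc with (fun a => rpow a p).
    + exists (mkposreal u Hu). intros y Hy.
      unfold ball in Hy; simpl in Hy; unfold AbsRing_ball, abs, minus, plus, opp in Hy; simpl in Hy.
      apply Rabs_def2 in Hy. rewrite Rabs_right by lra. auto.
    + apply is_derive_Reals. replace (p * psi p u) with (p * Rpower u (p-1)).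
      apply derivable_rpow_pos; lra.
      unfold psi. rewrite Rabs_right by lra. rewrite rpow_pos_eq by lra.
      replace (p-1) with (1 + (p-2)) by ring. rewrite Rpower_plus, Rpower_1 by lra. ring.
Qed.

Lemma cont_rpow_nonneg q u : 0 < q -> 0 <= u -> continuity_pt (fun a => rpow a q) u.
Proof.
  intros Hq [Hu|Hu]. now apply cont_rpow_pos. subst.
  apply cont_pt_intro. intros eps He. destruct (rpow_small q eps Hq He) as [d [Hd Hs]].
  exists d; split; auto. intros y Hy. rewrite Rminus_0_r in Hy. rewrite (rpow_nonpos 0), Rminus_0_r by lra.
  destruct (Rle_dec y 0). rewrite rpow_nonpos, Rabs_R0; lra.
  rewrite Rabs_pos_eq by apply rpow_ge0. apply Hs. split. lra. apply Rabs_def2 in Hy; lra.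
Qed.

Lemma deriv_rpow_aff a0 k q x : 0 < a0 + k * x ->
  derivable_pt_lim (fun x => rpow (a0 + k * x) q) x (k * (q * Rpower (a0 + k*x) (q-1))).
Proof.
  intros H.
  assert (H1: derivable_pt_lim (fun x => a0 + k*x) x k).
  { apply (is_derive_Reals (fun x => a0 + k*x)). auto_derive; auto; ring. }
  pose proof (derivable_pt_lim_comp _ _ _ _ _ H1 (derivable_rpow_pos _ q H)) as H3.
  rewrite Rmult_comm. exact H3.
Qed.

Lemma mono_mvt f df a b : a <= b ->
  (forall x, a < x < b -> derivable_pt_lim f x (df x)) ->
  (forall x, a <= x <= b -> 0 <= df x) ->
  (forall x, a <= x <= b -> continuity_pt f x) -> f a <= f b.
Proof.
  intros Hab Hd Hpos Hc. destruct (MVT_gen f a b df) as [c [Hc1 Hc2]].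
  - intros x Hx. rewrite Rmin_left, Rmax_right in Hx by lra. apply is_derive_Reals; auto.
  - intros x Hx. rewrite Rmin_left, Rmax_right in Hx by lra. auto.
  - rewrite Rmin_left, Rmax_right in Hc1 by lra. pose proof (Hpos c Hc1). nra.
Qed.

Lemma dpl_eq f x l l' : derivable_pt_lim f x l -> l = l' -> derivable_pt_lim f x l'.
Proof. intros H ->; auto. Qed.

Lemma rpow_le_base' a b q : 0 <= q -> 0 <= a <= b -> 0 < b -> rpow a q <= rpow b q.
Proof.
  intros [Hq|Hq] Hab Hb. apply rpow_le_base; auto. subst.
  rewrite (rpow_pos_eq b), Rpower_O by lra. destruct (Rle_dec a 0). rewrite rpow_nonpos; lra.
  rewrite rpow_pos_eq, Rpower_O; lra.
Qed.

Lemma rpow_le_self u q : 0 <= u <= 1 -> 1 <= q -> rpow u q <= u.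
Proof.
  intros Hu Hq. replace q with (1 + (q-1)) by ring. rewrite rpow_plus, rpow_1 by lra.
  pose proof (rpow_le1 u (q-1) Hu ltac:(lra)). pose proof (rpow_ge0 u (q-1)). nra.
Qed.

Lemma superadd q x : 1 <= q -> 0 <= x -> 1 + rpow x q <= rpow (1+x) q.
Proof.
  intros Hq Hx. replace q with (1 + (q-1)) by ring. rewrite !rpow_plus, !rpow_1 by lra.
  assert (H1: 1 <= rpow (1+x) (q-1)). { pose proof (rpow_le_base' 1 (1+x) (q-1)). rewrite rpow_one in H. apply H; lra. }
  assert (H2: rpow x (q-1) <= rpow (1+x) (q-1)). { apply rpow_le_base'; lra. }
  nra.
Qed.

Lemma ineq_i p s : 2 <= p -> 0 <= s -> 1 + p*s + rpow s p <= rpow (1+s) p.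
Proof.
  intros Hp Hs.
  set (f := fun x => rpow (1 + 1*x) p - (1 + p*x) - rpow x p).
  assert (f 0 <= f s).
  { apply (mono_mvt f (fun x => 1 * (p * rpow (1 + 1*x) (p-1)) - p - p * rpow x (p-1))); auto.
    - intros x Hx. unfold f. apply derivable_pt_lim_minus. apply derivable_pt_lim_minus.
      rewrite rpow_pos_eq by lra. apply deriv_rpow_aff; lra. apply (is_derive_Reals (fun x => 1 + p*x)). auto_derive; auto; ring.
      apply dpl_eq with (p * Rpower x (p-1)). apply derivable_rpow_pos; lra. rewrite rpow_pos_eq; lra.
    - intros x Hx.
      pose proof (superadd (p-1) x ltac:(lra) ltac:(lra)). replace (1 + 1*x) with (1+x) by ring. nra.
    - intros x Hx. unfold f. apply continuity_pt_minus. apply continuity_pt_minus.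
      apply (continuity_pt_comp (fun x => 1 + 1*x) (fun a => rpow a p)).
      apply derivable_continuous_pt. exists 1. apply (is_derive_Reals (fun x => 1 + 1*x)); auto_derive; auto; ring.
      apply cont_rpow_pos; lra.
      apply derivable_continuous_pt. exists p. apply (is_derive_Reals (fun x => 1 + p*x)); auto_derive; auto; ring.
      apply cont_rpow_nonneg; lra. }
  unfold f in H. replace (1+1*0) with 1 in H by ring. replace (1 + 1*s) with (1+s) in H by ring.
  rewrite rpow_one, (rpow_nonpos 0) in H by lra. lra.
Qed.

Lemma ineq_ii p s : 2 <= p -> 0 <= s <= 1 -> rpow s p <= rpow (1-s) p - 1 + p*s.
Proof.
  intros Hp Hs.
  set (f := fun x => rpow (1 + (-1)*x) p + (p*x - 1) - rpow x p).
  assert (f 0 <= f s).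
  { apply (mono_mvt f (fun x => -1 * (p * rpow (1 + (-1)*x) (p-1)) + p - p * rpow x (p-1))); try lra.
    - intros x Hx. unfold f. apply derivable_pt_lim_minus. apply derivable_pt_lim_plus.
      rewrite rpow_pos_eq by lra. apply deriv_rpow_aff; lra.
      apply (is_derive_Reals (fun x => p*x - 1)). auto_derive; auto; ring.
      apply dpl_eq with (p * Rpower x (p-1)). apply derivable_rpow_pos; lra. rewrite rpow_pos_eq; lra.
    - intros x Hx.
        pose proof (rpow_le_self x (p-1) ltac:(lra) ltac:(lra)).
        pose proof (rpow_le_self (1 + -1*x) (p-1) ltac:(lra) ltac:(lra)). nra.
    - intros x Hx. unfold f. apply continuity_pt_minus. apply continuity_pt_plus.
      apply (continuity_pt_comp (fun x => 1 + -1*x) (fun a => rpow a p)).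
      apply derivable_continuous_pt. exists (-1). apply (is_derive_Reals (fun x => 1 + -1*x)); auto_derive; auto; ring.
      apply cont_rpow_nonneg; lra.
      apply derivable_continuous_pt. exists p. apply (is_derive_Reals (fun x => p*x - 1)); auto_derive; auto; ring.
      apply cont_rpow_nonneg; lra. }
  unfold f in H. replace (1 + -1*0) with 1 in H by ring. replace (1 + -1*s) with (1-s) in H by ring.
  rewrite rpow_one, (rpow_nonpos 0) in H by lra. lra.
Qed.

Lemma cp_fun_half p : cp_fun p (1/2) = p * Rpower (1/2) (p-1).
Proof. unfold cp_fun. replace (1 - 1/2) with (1/2) by field. ring. Qed.

Lemma two_pow_ge p : 2 <= p -> p <= exp ((p-1) * ln 2).
Proof.
  intros Hp. replace ((p-1) * ln 2) with (ln 2 + (p-2)*ln 2) by ring.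
  rewrite exp_plus, exp_ln by lra. pose proof (exp_ineq1_le ((p-2)*ln 2)). pose proof ln_lt_2. nra.
Qed.

Lemma cp_le1 p c : 2 <= p -> is_cp p c -> c <= 1.
Proof.
  intros Hp [_ Hc]. specialize (Hc (1/2) ltac:(lra)). rewrite cp_fun_half in Hc.
  unfold Rpower in Hc. replace (ln (1/2)) with (- ln 2) in Hc.
  2:{ unfold Rdiv. rewrite Rmult_1_l, ln_Rinv; lra. }
  replace ((p-1) * - ln 2) with (- ((p-1)*ln 2)) in Hc by ring. rewrite exp_Ropp in Hc.
  pose proof (two_pow_ge p Hp). pose proof (exp_pos ((p-1)*ln 2)).
  apply Rle_trans with (1 := Hc). apply Rmult_le_reg_r with (exp ((p - 1) * ln 2)); auto.
  rewrite Rmult_assoc, Rinv_l by lra. lra.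
Qed.

Lemma cp_nonneg p c : 2 <= p -> is_cp p c -> 0 <= c.
Proof.
  intros Hp [[t0 [Ht0 Hc]] _]. subst. unfold cp_fun.
  pose proof (Rle_Rpower_l t0 (1-t0) p ltac:(lra) ltac:(lra)). pose proof (Rpower_pos t0 (p-1)). nra.
Qed.

Lemma Rpower_split x p : 0 < x -> Rpower x p = x * Rpower x (p-1).
Proof. intros Hx. replace p with (1 + (p-1)) at 1 by ring. rewrite Rpower_plus, Rpower_1; lra. Qed.

Lemma cp_sym p t : 2 <= p -> 1/2 <= t < 1 -> cp_fun p (1-t) <= cp_fun p t.
Proof.
  intros Hp Ht. unfold cp_fun. replace (1 - (1-t)) with t by ring. set (u := 1-t).
  assert (Hu: 0 < u <= t) by (unfold u; lra).
  rewrite (Rpower_split t p), (Rpower_split u p), (Rpower_split t (p-1)), (Rpower_split u (p-1)) by lra.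
  replace (p-1-1) with (p-2) by ring.
  set (T := Rpower t (p-2)). set (U := Rpower u (p-2)).
  assert (HTU: U <= T) by (apply Rle_Rpower_l; lra). assert (0 < U) by apply Rpower_pos.
  assert (H1: 0 <= t*u*(T-U)) by (apply Rmult_le_pos; [nra|lra]).
  assert (H2: u*U <= t*T) by nra.
  assert (Hsum: t + u = 1) by (unfold u; ring).
  assert (H3: t*t*T - u*u*U <= t*T - u*U).
  { replace (t*T - u*U - (t*t*T - u*u*U)) with (t*u*(T-U)) in H1. nra.
    replace u with (1-t) by (unfold u; ring). ring. }
  nra.
Qed.

Lemma scalar_h p c s : 2 <= p -> is_cp p c -> 1 + p*s + c * rpow (Rabs s) p <= rpow (Rabs (1+s)) p.
Proof.
  intros Hp Hc. pose proof (cp_le1 p c Hp Hc). pose proof (cp_nonneg p c Hp Hc).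
  destruct (Rle_dec 0 s).
  - rewrite !Rabs_pos_eq by lra. pose proof (ineq_i p s Hp r). pose proof (rpow_ge0 s p). nra.
  - destruct (Rle_dec (-1) s).
    + rewrite Rabs_left, Rabs_pos_eq by lra. pose proof (ineq_ii p (-s) Hp ltac:(lra)).
      replace (1 - -s) with (1+s) in H1 by ring. pose proof (rpow_ge0 (-s) p). nra.
    + set (t := - / s). assert (Ht: 0 < t < 1).
      { unfold t. split. apply Ropp_0_gt_lt_contravar, Rinv_lt_0_compat; lra.
        rewrite <- (Rinv_1). rewrite <- Rinv_opp. apply Rinv_lt_contravar; lra. }
      assert (Hs: s = - / t) by (unfold t; field; lra).
      rewrite Rabs_left, Rabs_left by lra.
      replace (- (1+s)) with ((1-t) * / t) by (rewrite Hs; field; lra).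
      replace (-s) with (/ t) by (rewrite Hs; field; lra).
      rewrite rpow_mult, !rpow_inv, !rpow_pos_eq by (try apply Rlt_le; try apply Rinv_0_lt_compat; lra).
      assert (Hct: c <= cp_fun p t).
      { destruct Hc as [_ Hc]. destruct (Rle_dec t (1/2)). apply Hc; lra.
        apply Rle_trans with (cp_fun p (1-t)). apply Hc; lra. apply cp_sym; lra. }
      unfold cp_fun in Hct.
      assert (HP: Rpower t p = t * Rpower t (p-1)).
      { replace p with (1 + (p-1)) at 1 by ring. rewrite Rpower_plus, Rpower_1; lra. }
      pose proof (Rpower_pos t p). pose proof (Rpower_pos t (p-1)).
      rewrite Hs. apply Rmult_le_reg_r with (Rpower t p); auto.
      replace ((1 + p * - / t + c * / Rpower t p) * Rpower t p) with (Rpower t p - p * Rpower t (p-1) + c).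
      2:{ rewrite HP. field. lra. }
      replace (Rpower (1 - t) p * / Rpower t p * Rpower t p) with (Rpower (1-t) p) by (field; lra).
      lra.
Qed.

Lemma scalar_ineq p c a b : 2 <= p -> is_cp p c ->
  rpow (Rabs a) p + p * psi p a * b + c * rpow (Rabs b) p <= rpow (Rabs (a+b)) p.
Proof.
  intros Hp Hc. destruct (Req_dec a 0).
  - subst. unfold psi. rewrite Rabs_R0, (rpow_nonpos 0), Rplus_0_l by lra.
    pose proof (cp_le1 p c Hp Hc). pose proof (rpow_ge0 (Rabs b) p). rewrite Rplus_0_l. nra.
  - set (s := b / a). assert (Hb: b = a * s) by (unfold s; field; auto). rewrite Hb.
    replace (a + a*s) with (a * (1+s)) by ring. rewrite !Rabs_mult.
    rewrite !rpow_mult by apply Rabs_pos.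
    replace (p * psi p a * (a * s)) with (p * s * (psi p a * a)) by ring. rewrite psi_mul_self.
    pose proof (scalar_h p c s Hp Hc). pose proof (rpow_ge0 (Rabs a) p). nra.
Qed.

Lemma exp_convex l x y : 0 <= l <= 1 -> exp (l*x + (1-l)*y) <= l * exp x + (1-l) * exp y.
Proof.
  intros Hl. set (m := l*x + (1-l)*y).
  assert (Hx: exp m * (1 + (x - m)) <= exp x).
  { replace x with (m + (x - m)) at 2 by ring. rewrite exp_plus.
    pose proof (exp_pos m). pose proof (exp_ineq1_le (x-m)). nra. }
  assert (Hy: exp m * (1 + (y - m)) <= exp y).
  { replace y with (m + (y - m)) at 2 by ring. rewrite exp_plus.
    pose proof (exp_pos m). pose proof (exp_ineq1_le (y-m)). nra. }
  assert (E: l * (exp m * (1 + (x - m))) + (1-l) * (exp m * (1 + (y - m))) = exp m) by (unfold m; ring).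
  nra.
Qed.

Lemma young p u v : 1 < p -> 0 <= u -> 0 <= v ->
  u * v <= rpow u p / p + rpow v (p / (p-1)) / (p / (p-1)).
Proof.
  intros Hp Hu Hv. set (q := p/(p-1)).
  assert (Hq: 0 < q) by (unfold q; apply Rdiv_lt_0_compat; lra).
  pose proof (rpow_ge0 u p). pose proof (rpow_ge0 v q).
  destruct Hu as [Hu|Hu]; [destruct Hv as [Hv|Hv]|].
  2,3: subst; rewrite ?Rmult_0_l, ?Rmult_0_r; apply Rplus_le_le_0_compat; apply Rmult_le_pos; try apply Rlt_le, Rinv_0_lt_compat; lra.
  rewrite !rpow_pos_eq by auto. unfold Rpower.
  replace (u * v) with (exp (/p * (p * ln u) + (1 - /p) * (q * ln v))).
  - replace (exp (p * ln u) / p + exp (q * ln v) / q) with (/p * exp (p * ln u) + (1 - /p) * exp (q * ln v)).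
    apply exp_convex. split. apply Rlt_le, Rinv_0_lt_compat; lra.
    rewrite <- Rinv_1. apply Rlt_le, Rinv_lt_contravar; lra.
    unfold q. field. lra.
  - replace (/p * (p * ln u) + (1 - /p) * (q * ln v)) with (ln u + ln v).
    rewrite exp_plus, !exp_ln; auto. unfold q. field. lra.
Qed.

Lemma sumn_ext n g h : (forall i, (i < n)%nat -> g i = h i) -> sumn n g = sumn n h.
Proof. induction n; simpl; intros H; auto. rewrite IHn, H; auto. Qed.
Lemma sumn_nonneg n g : (forall i, (i < n)%nat -> 0 <= g i) -> 0 <= sumn n g.
Proof. induction n; simpl; intros H. lra. pose proof (H n ltac:(lia)). pose proof (IHn ltac:(intros; apply H; lia)). lra. Qed.
Lemma sumn_le n g h : (forall i, (i < n)%nat -> g i <= h i) -> sumn n g <= sumn n h.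
Proof. induction n; simpl; intros H. lra. pose proof (H n ltac:(lia)). pose proof (IHn ltac:(intros; apply H; lia)). lra. Qed.
Lemma sumn_plus n g h : sumn n (fun i => g i + h i) = sumn n g + sumn n h.
Proof. induction n; simpl. ring. rewrite IHn; ring. Qed.
Lemma sumn_scal n a g : sumn n (fun i => a * g i) = a * sumn n g.
Proof. induction n; simpl. ring. rewrite IHn; ring. Qed.
Lemma sumn_term n g i : (i < n)%nat -> (forall j, (j < n)%nat -> 0 <= g j) -> g i <= sumn n g.
Proof.
  induction n; intros Hi H. lia. simpl. destruct (Nat.eq_dec i n).
  - subst. pose proof (sumn_nonneg n g ltac:(intros; apply H; lia)). lra.
  - pose proof (H n ltac:(lia)). pose proof (IHn ltac:(lia) ltac:(intros; apply H; lia)). lra.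
Qed.
Lemma sumn_indic n k a : 0 <= a -> sumn n (fun j => if Nat.eqb j k then a else 0) <= a.
Proof.
  intros Ha. induction n; simpl. lra.
  destruct (Nat.eqb_spec n k).
  - subst. assert (sumn k (fun j => if Nat.eqb j k then a else 0) = 0).
    { clear IHn. rewrite (sumn_ext k _ (fun _ => 0)). clear. induction k; simpl; lra.
      intros i Hi. destruct (Nat.eqb_spec i k); [lia|auto]. }
    lra.
  - lra.
Qed.

Lemma upd_eq x k t : upd x k t k = t.
Proof. unfold upd. now rewrite Nat.eqb_refl. Qed.
Lemma upd_neq x k t j : j <> k -> upd x k t j = x j.
Proof. intros H. unfold upd. destruct (Nat.eqb_spec j k); [lia|auto]. Qed.
Lemma upd_same x k : upd x k (x k) = x.
Proof. apply functional_extensionality; intros j. unfold upd. destruct (Nat.eqb_spec j k); subst; auto. Qed.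
Lemma upd_upd x k s t : upd (upd x k s) k t = upd x k t.
Proof. apply functional_extensionality; intros j. unfold upd. destruct (Nat.eqb_spec j k); auto. Qed.
Lemma upd_comm x k s i t : k <> i -> upd (upd x k s) i t = upd (upd x i t) k s.
Proof.
  intros H. apply functional_extensionality; intros j. unfold upd.
  destruct (Nat.eqb_spec j i), (Nat.eqb_spec j k); subst; auto; lia.
Qed.

Lemma distn_refl n x : distn n x x = 0.
Proof. unfold distn, normn. rewrite (sumn_ext n _ (fun _ => 0)). 2: intros; ring.
  assert (sumn n (fun _ => 0) = 0) by (clear; induction n; simpl; lra). rewrite H. apply sqrt_0. Qed.
Lemma dist_coord n x y i : (i < n)%nat -> Rabs (y i - x i) <= distn n x y.
Proof.
  intros Hi. unfold distn, normn. rewrite <- sqrt_Rsqr_abs. apply sqrt_le_1_alt.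
  unfold Rsqr. replace ((y i - x i) * (y i - x i)) with ((fun j => (y j - x j)^2) i) by (simpl; ring).
  apply (sumn_term n (fun j => (y j - x j)^2) i); auto. intros; apply pow2_ge_0.
Qed.
Lemma sqrt_plus_sq a c : 0 <= c -> sqrt (a^2 + c) <= Rabs a + sqrt c.
Proof.
  intros Hc. rewrite <- (sqrt_Rsqr (Rabs a + sqrt c)).
  2: { pose proof (Rabs_pos a); pose proof (sqrt_pos c); lra. }
  apply sqrt_le_1_alt. unfold Rsqr. pose proof (sqrt_sqrt c Hc). pose proof (Rabs_pos a). pose proof (sqrt_pos c).
  replace (a^2) with (Rabs a * Rabs a). nra. rewrite <- Rabs_mult. rewrite Rabs_pos_eq; [ring|nra].
Qed.
Lemma dist_upd n x y k s t : distn n (upd x k s) (upd y k t) <= Rabs (t - s) + distn n x y.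
Proof.
  unfold distn, normn. eapply Rle_trans; [|apply sqrt_plus_sq].
  2: apply sumn_nonneg; intros; apply pow2_ge_0.
  apply sqrt_le_1_alt.
  apply Rle_trans with (sumn n (fun j => (y j - x j)^2 + (if Nat.eqb j k then (t-s)^2 else 0))).
  - apply sumn_le. intros j Hj. unfold upd. destruct (Nat.eqb_spec j k). 
    pose proof (pow2_ge_0 (y j - x j)); lra. lra.
  - rewrite sumn_plus. pose proof (sumn_indic n k ((t-s)^2) ltac:(apply pow2_ge_0)). lra.
Qed.

Definition cont_at n (F : (nat -> R) -> R) x := forall eps, 0 < eps -> exists d, 0 < d /\
    forall y, distn n x y < d -> Rabs (F y - F x) < eps.
Lemma contn_at n F : contn n F <-> forall x, cont_at n F x.
Proof. split; intros H; [intros x eps He; apply H; auto | intros x eps He; apply H; auto]. Qed.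

Lemma cont_upd n H x k t : contn n H -> continuity_pt (fun t => H (upd x k t)) t.
Proof.
  intros HH. apply cont_pt_intro. intros eps He. destruct (HH (upd x k t) eps He) as [d [Hd Hy]].
  exists d; split; auto. intros y Hyt. apply Hy. eapply Rle_lt_trans. apply dist_upd.
  rewrite distn_refl. lra.
Qed.
Lemma cont_upd_c n H x k t : contn n H -> continuous (fun t => H (upd x k t)) t.
Proof. intros; apply continuity_pt_filterlim; eapply cont_upd; eauto. Qed.

Lemma contn_ext n F G : (forall x, F x = G x) -> contn n F -> contn n G.
Proof. intros E H x eps He. destruct (H x eps He) as [d [Hd Hy]]. exists d; split; auto. intros y; rewrite <- !E; auto. Qed.

Definition bsupp k n M (F : (nat -> R) -> R) := forall x j, (k <= j)%nat -> (j < n)%nat -> M < Rabs (x j) -> F x = 0.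

Lemma RInt_zero_fun a b : RInt (fun _ => 0) a b = 0.
Proof. rewrite (RInt_const (V:=R_CompleteNormedModule)). unfold scal; simpl; unfold mult; simpl. ring. Qed.

Lemma RInt_sym_ext g M M2 : (forall t, continuity_pt g t) -> (forall t, M < Rabs t -> g t = 0) ->
  0 < M <= M2 -> RInt g (-M2) M2 = RInt g (-M) M.
Proof.
  intros Hc Hz HM.
  assert (ex: forall a b, ex_RInt g a b).
  { intros a b. apply (ex_RInt_continuous (V:=R_CompleteNormedModule)). intros z _. apply continuity_pt_filterlim, Hc. }
  rewrite <- (RInt_Chasles (V:=R_CompleteNormedModule) g (-M2) (-M) M2) by auto. rewrite <- (RInt_Chasles (V:=R_CompleteNormedModule) g (-M) M M2) by auto.
  rewrite (RInt_ext (V:=R_CompleteNormedModule) g (fun _ => 0) (-M2) (-M)). 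
  rewrite (RInt_ext (V:=R_CompleteNormedModule) g (fun _ => 0) M M2). rewrite !RInt_zero_fun.
  unfold plus; simpl. ring.
  - intros x Hx. rewrite Rmin_left, Rmax_right in Hx by lra. apply Hz. rewrite Rabs_pos_eq; lra.
  - intros x Hx. rewrite Rmin_left, Rmax_right in Hx by lra. apply Hz. rewrite Rabs_left; lra.
Qed.

Lemma Rint_eq g M : (forall t, continuity_pt g t) -> (forall t, M < Rabs t -> g t = 0) -> 0 < M ->
  Rint g = RInt g (-M) M.
Proof.
  intros Hc Hz HM.
  assert (HI: is_Rint g (RInt g (-M) M)).
  { exists M. split; auto. split; auto.
    assert (pr: Riemann_integrable g (-M) M) by (apply continuity_implies_RiemannInt; [lra|auto]).
    exists pr. symmetry. apply RInt_Reals. }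
  unfold Rint. destruct (epsilon_spec (inhabits 0) (is_Rint g) (ex_intro _ _ HI)) as [M' [HM' [Hz' [pr' E]]]].
  rewrite <- E, <- RInt_Reals.
  set (M2 := Rmax M M').
  rewrite <- (RInt_sym_ext g M' M2), <- (RInt_sym_ext g M M2); auto; unfold M2.
  split; auto; apply Rmax_l. split; auto; apply Rmax_r.
Qed.

Lemma Rint_eq' g M M2 : (forall t, continuity_pt g t) -> (forall t, M < Rabs t -> g t = 0) -> 0 < M -> M <= M2 ->
  Rint g = RInt g (-M2) M2.
Proof. intros. rewrite (Rint_eq g M); auto. symmetry; apply RInt_sym_ext; auto; lra. Qed.

Lemma ex_RInt_upd n H x k a b : contn n H -> ex_RInt (fun t => H (upd x k t)) a b.
Proof. intros HH. apply (ex_RInt_continuous (V:=R_CompleteNormedModule)). intros z _. eapply cont_upd_c; eauto. Qed.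

Lemma integ_step n F M k x : (k < n)%nat -> 0 < M -> contn n (integ k F) -> bsupp k n M (integ k F) ->
  integ (S k) F x = RInt (fun t => integ k F (upd x k t)) (-M) M.
Proof.
  intros Hk HM Hc Hs. simpl. apply Rint_eq; auto.
  - intros t; eapply cont_upd; eauto.
  - intros t Ht. apply (Hs _ k); auto. rewrite upd_eq; auto.
Qed.

Lemma cont_param_int n H M k : contn n H -> 0 < M ->
  contn n (fun x => RInt (fun t => H (upd x k t)) (-M) M).
Proof.
  intros HH HM x eps He.
  set (e := eps / (4*M)). assert (He': 0 < e) by (unfold e; apply Rdiv_lt_0_compat; lra).
  assert (Hd: forall t, {d : R | 0 < d /\ forall z, distn n (upd x k t) z < d -> Rabs (H z - H (upd x k t)) < e/2}).
  { intros t. apply constructive_indefinite_description. apply HH. lra. }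
  set (dl := fun t => proj1_sig (Hd t)).
  assert (Hdl: forall t, 0 < dl t / 2) by (intros t; unfold dl; pose proof (proj1 (proj2_sig (Hd t))); lra).
  destruct (compactness_value_1d (-M) M (fun t => mkposreal _ (Hdl t))) as [d Hcv].
  exists d. split. apply cond_pos. intros y Hy.
  assert (Hb: forall s, -M <= s <= M -> Rabs (H (upd y k s) - H (upd x k s)) <= e).
  { intros s Hs. specialize (Hcv s Hs). simpl in Hcv.
    apply NNPP. intros Hn. apply Hcv. intros [t [Ht [Hst Hdt]]].
    apply Hn. unfold dl in *. destruct (proj2_sig (Hd t)) as [Hdt0 Hdt1]. simpl in *.
    assert (A1: Rabs (H (upd y k s) - H (upd x k t)) < e/2).
    { apply Hdt1. eapply Rle_lt_trans. apply dist_upd. lra. }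
    assert (A2: Rabs (H (upd x k s) - H (upd x k t)) < e/2).
    { apply Hdt1. eapply Rle_lt_trans. apply dist_upd. rewrite distn_refl. lra. }
    rewrite Rabs_minus_sym in A2. pose proof (Rabs_triang (H (upd y k s) - H (upd x k t)) (H (upd x k t) - H (upd x k s))).
    replace (H (upd y k s) - H (upd x k t) + (H (upd x k t) - H (upd x k s))) with (H (upd y k s) - H (upd x k s)) in H0 by ring.
    lra. }
  assert (E: RInt (fun t => H (upd y k t)) (-M) M - RInt (fun t => H (upd x k t)) (-M) M
             = RInt (fun t => H (upd y k t) - H (upd x k t)) (-M) M).
  { symmetry. apply (RInt_minus (V:=R_CompleteNormedModule)); eapply ex_RInt_upd; eauto. }
  rewrite E. eapply Rle_lt_trans. apply abs_RInt_le_const. lra.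
  apply (ex_RInt_minus (V:=R_CompleteNormedModule)); eapply ex_RInt_upd; eauto.
  exact Hb. unfold e. replace ((M - - M) * (eps / (4 * M))) with (eps/2) by (field; lra). lra.
Qed.

Definition Good n M F := contn n F /\ bsupp 0 n M F.

Lemma integ_good n M F : 0 < M -> Good n M F -> forall k, (k <= n)%nat ->
  contn n (integ k F) /\ bsupp k n M (integ k F).
Proof.
  intros HM [Hc Hs]. induction k; intros Hk.
  - simpl. split; auto.
  - destruct (IHk ltac:(lia)) as [Hc' Hs']. split.
    + apply contn_ext with (fun x => RInt (fun t => integ k F (upd x k t)) (-M) M).
      intros x. symmetry. apply (integ_step n); auto.
      eapply cont_param_int; eauto.
    + intros x j Hj1 Hj2 Hx. rewrite (integ_step n F M k x); auto; try lia.
      rewrite (RInt_ext (V:=R_CompleteNormedModule) _ (fun _ => 0)). apply RInt_zero_fun.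
      intros t _. apply (Hs' _ j); try lia. rewrite upd_neq; auto; lia.
Qed.

Lemma integ_formula n M F k x : 0 < M -> Good n M F -> (k < n)%nat ->
  integ (S k) F x = RInt (fun t => integ k F (upd x k t)) (-M) M.
Proof.
  intros HM HG Hk. destruct (integ_good n M F HM HG k ltac:(lia)). apply (integ_step n); auto.
Qed.

Lemma Good_lin n M F G a b : Good n M F -> Good n M G -> Good n M (fun x => a * F x + b * G x).
Proof.
  intros [HcF HsF] [HcG HsG]. split.
  - intros x eps He.
    set (e := eps / (2 * (Rabs a + Rabs b + 1))).
    assert (He': 0 < e). { unfold e. apply Rdiv_lt_0_compat; auto. pose proof (Rabs_pos a); pose proof (Rabs_pos b); lra. }
    assert (Hee: (Rabs a + Rabs b) * e < eps).
    { unfold e. apply Rlt_le_trans with ((Rabs a + Rabs b + 1) * (eps / (2 * (Rabs a + Rabs b + 1)))).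
      apply Rmult_lt_compat_r. apply Rdiv_lt_0_compat; auto. pose proof (Rabs_pos a); pose proof (Rabs_pos b); lra. lra.
      replace ((Rabs a + Rabs b + 1) * (eps / (2 * (Rabs a + Rabs b + 1)))) with (eps/2) by (field; pose proof (Rabs_pos a); pose proof (Rabs_pos b); lra). lra. }
    clearbody e.
    destruct (HcF x e He') as [d1 [Hd1 H1]]. destruct (HcG x e He') as [d2 [Hd2 H2]].
    exists (Rmin d1 d2). split. apply Rmin_pos; auto. intros y Hy.
    specialize (H1 y ltac:(pose proof (Rmin_l d1 d2); lra)). specialize (H2 y ltac:(pose proof (Rmin_r d1 d2); lra)).
    replace (a * F y + b * G y - (a * F x + b * G x)) with (a * (F y - F x) + b * (G y - G x)) by ring.
    eapply Rle_lt_trans. apply Rabs_triang. rewrite !Rabs_mult.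
    pose proof (Rabs_pos a); pose proof (Rabs_pos b).
    assert (Rabs a * Rabs (F y - F x) + Rabs b * Rabs (G y - G x) <= (Rabs a + Rabs b) * e).
    { apply Rle_trans with (Rabs a * e + Rabs b * e). apply Rplus_le_compat; apply Rmult_le_compat_l; lra. lra. }
    lra.
  - intros x j Hj1 Hj2 Hx. rewrite (HsF x j), (HsG x j); auto. ring.
Qed.

Lemma RInt_lin f g a b l u : ex_RInt f l u -> ex_RInt g l u ->
  RInt (fun t => a * f t + b * g t) l u = a * RInt f l u + b * RInt g l u.
Proof.
  intros Hf Hg. apply is_RInt_unique.
  apply (is_RInt_plus (V:=R_CompleteNormedModule) (fun t => a * f t) (fun t => b * g t)).
  apply (is_RInt_scal (V:=R_CompleteNormedModule) f). apply RInt_correct; auto.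
  apply (is_RInt_scal (V:=R_CompleteNormedModule) g). apply RInt_correct; auto.
Qed.

Lemma integ_lin n M F G a b : 0 < M -> Good n M F -> Good n M G -> forall k, (k <= n)%nat -> forall x,
  integ k (fun x => a * F x + b * G x) x = a * integ k F x + b * integ k G x.
Proof.
  intros HM HF HG. pose proof (Good_lin n M F G a b HF HG) as HL.
  induction k; intros Hk x. simpl; auto.
  rewrite (integ_formula n M _ k x HM HL), (integ_formula n M F k x HM HF), (integ_formula n M G k x HM HG) by lia.
  rewrite (RInt_ext (V:=R_CompleteNormedModule) _ (fun t => a * integ k F (upd x k t) + b * integ k G (upd x k t))).
  2:{ intros t _. rewrite IHk by lia. reflexivity. }
  destruct (integ_good n M F HM HF k ltac:(lia)) as [HcF _]. destruct (integ_good n M G HM HG k ltac:(lia)) as [HcG _].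
  apply RInt_lin; eapply ex_RInt_upd; [exact HcF|exact HcG].
Qed.

Lemma integ_mono n M F G : 0 < M -> Good n M F -> Good n M G -> (forall x, F x <= G x) ->
  forall k, (k <= n)%nat -> forall x, integ k F x <= integ k G x.
Proof.
  intros HM HF HG Hle. induction k; intros Hk x. simpl; auto.
  rewrite (integ_formula n M F k x HM HF), (integ_formula n M G k x HM HG) by lia.
  destruct (integ_good n M F HM HF k ltac:(lia)) as [HcF _]. destruct (integ_good n M G HM HG k ltac:(lia)) as [HcG _].
  apply RInt_le. lra. eapply ex_RInt_upd; exact HcF. eapply ex_RInt_upd; exact HcG.
  intros t _. apply IHk; lia.
Qed.

Lemma integ_zero_fun k x : integ k (fun _ => 0) x = 0.
Proof.
  revert x. induction k; intros x; simpl; auto.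
  rewrite (Rint_eq _ 1). rewrite (RInt_ext (V:=R_CompleteNormedModule) _ (fun _ => 0)). apply RInt_zero_fun.
  intros; auto. intros t. apply continuity_pt_ext with (fun _ => 0). intros; symmetry; auto. apply continuity_pt_const; intros a b; auto.
  intros; auto. lra.
Qed.

Lemma Good_zero n M : Good n M (fun _ => 0).
Proof. split. intros x eps He. exists 1. split. lra. intros. rewrite Rminus_diag, Rabs_R0; auto. intros x j; auto. Qed.

Lemma Good_ext n M F G : (forall x, F x = G x) -> Good n M F -> Good n M G.
Proof.
  intros E [Hc Hs]. split. eapply contn_ext; eauto. intros x j H1 H2 H3. rewrite <- E. eapply Hs; eauto.
Qed.

Lemma Good_sumn n M m H : (forall i, (i < m)%nat -> Good n M (H i)) -> Good n M (fun x => sumn m (fun i => H i x)).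
Proof.
  induction m; intros HH; simpl. apply Good_zero.
  apply (Good_ext n M (fun x => 1 * sumn m (fun i => H i x) + 1 * H m x)). intros; ring.
  apply Good_lin. apply IHm; intros; apply HH; lia. apply HH; lia.
Qed.

Lemma integ_sumn n M m H : 0 < M -> (forall i, (i < m)%nat -> Good n M (H i)) -> forall k, (k <= n)%nat -> forall x,
  integ k (fun x => sumn m (fun i => H i x)) x = sumn m (fun i => integ k (H i) x).
Proof.
  intros HM. induction m; intros HH k Hk x; simpl. apply integ_zero_fun.
  transitivity (integ k (fun x => 1 * sumn m (fun i => H i x) + 1 * H m x) x).
  { f_equal. apply functional_extensionality; intros; ring. }
  rewrite (integ_lin n M). rewrite IHm. ring. all: try lia; try assumption; try (intros; apply HH; lia); try (apply Good_sumn; intros; apply HH; lia).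
Qed.

Lemma cont2d_of_contn n H x i k u0 v0 : contn n H ->
  continuity_2d_pt (fun u v => H (upd (upd x i u) k v)) u0 v0.
Proof.
  intros HH eps. destruct (HH (upd (upd x i u0) k v0) eps (cond_pos eps)) as [d [Hd Hy]].
  exists (mkposreal (d/2) ltac:(lra)). intros u v Hu Hv. simpl in *. apply Hy.
  eapply Rle_lt_trans. apply dist_upd. eapply Rle_lt_trans. apply Rplus_le_compat_l. apply dist_upd.
  rewrite distn_refl. lra.
Qed.

Lemma integ_deriv_param n M G D i : 0 < M -> Good n M G -> Good n M D -> (i < n)%nat ->
  (forall x, derivable_pt_lim (fun t => G (upd x i t)) (x i) (D x)) ->
  forall k, (k <= i)%nat -> forall x, derivable_pt_lim (fun t => integ k G (upd x i t)) (x i) (integ k D x).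
Proof.
  intros HM HG HD Hi Hder. induction k; intros Hk x. simpl; auto.
  destruct (integ_good n M G HM HG k ltac:(lia)) as [HcG _]. destruct (integ_good n M D HM HD k ltac:(lia)) as [HcD _].
  assert (IH: forall y, is_derive (fun t => integ k G (upd y i t)) (y i) (integ k D y)).
  { intros y. apply is_derive_Reals. apply IHk; lia. }
  assert (IsD: forall u v, is_derive (fun z => integ k G (upd (upd x i z) k v)) u (integ k D (upd (upd x i u) k v))).
  { intros u v.
    pose proof (IH (upd (upd x i u) k v)) as H1.
    rewrite upd_neq in H1 by lia. rewrite upd_eq in H1.
    eapply is_derive_ext; [|exact H1]. intros t. simpl. f_equal.
    rewrite <- upd_comm by lia. rewrite upd_upd. rewrite upd_comm by lia. auto. }
  assert (Der: forall u v, Derive (fun z => integ k G (upd (upd x i z) k v)) u = integ k D (upd (upd x i u) k v)).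
  { intros u v. apply is_derive_unique. apply IsD. }
  apply is_derive_Reals.
  apply is_derive_ext with (fun t => RInt (fun s => integ k G (upd (upd x i t) k s)) (-M) M).
  { intros t. symmetry. apply (integ_formula n M); auto; lia. }
  rewrite (integ_formula n M D k x) by (auto; lia).
  rewrite (RInt_ext (V:=R_CompleteNormedModule) (fun s => integ k D (upd x k s)) (fun s => Derive (fun u => integ k G (upd (upd x i u) k s)) (x i))).
  2:{ intros s _. rewrite Der. rewrite upd_same. auto. }
  apply (is_derive_RInt_param (fun u s => integ k G (upd (upd x i u) k s))).
  - apply filter_forall. intros u0 t _. exists (integ k D (upd (upd x i u0) k t)). apply IsD.
  - intros t _. eapply continuity_2d_pt_ext. 2: apply (cont2d_of_contn n (integ k D) x i k (x i) t HcD).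
    intros u v. simpl. symmetry. apply Der.
  - apply filter_forall. intros y. eapply ex_RInt_upd; eauto.
Qed.

Lemma integ_deriv_zero n M G D i : 0 < M -> Good n M G -> Good n M D -> (i < n)%nat ->
  (forall x, derivable_pt_lim (fun t => G (upd x i t)) (x i) (D x)) -> integRn n D = 0.
Proof.
  intros HM HG HD Hi Hder.
  destruct (integ_good n M G HM HG i ltac:(lia)) as [HcG HsG]. destruct (integ_good n M D HM HD i ltac:(lia)) as [HcD HsD].
  assert (Hb: forall x, integ (S i) D x = 0).
  { intros x. simpl. rewrite (Rint_eq' _ M (M+1)); try lra.
    2: intros t; eapply cont_upd; eauto.
    2: intros t Ht; apply (HsD _ i); auto; rewrite upd_eq; auto.
    apply is_RInt_unique.
    replace 0 with (minus (integ i G (upd x i (M+1))) (integ i G (upd x i (-(M+1))))).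
    apply (is_RInt_derive (V:=R_CompleteNormedModule) (fun t => integ i G (upd x i t))).
    - intros t _. apply is_derive_Reals.
      pose proof (integ_deriv_param n M G D i HM HG HD Hi Hder i (le_n i) (upd x i t)) as H1.
      rewrite upd_eq in H1. eapply derivable_pt_lim_ext; [|exact H1]. intros t'. simpl. rewrite upd_upd. auto.
    - intros t _. eapply cont_upd_c; eauto.
    - assert (Z1: integ i G (upd x i (M+1)) = 0) by (apply (HsG _ i); auto; rewrite upd_eq, Rabs_pos_eq; lra).
      assert (Z2: integ i G (upd x i (-(M+1))) = 0) by (apply (HsG _ i); auto; rewrite upd_eq, Rabs_left; lra).
      rewrite Z1, Z2. unfold minus, plus, opp; simpl; ring. }
  assert (Hc: forall m, (S i + m <= n)%nat -> forall x, integ (S i + m) D x = 0).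
  { induction m; intros Hm x. rewrite Nat.add_0_r; auto.
    replace (S i + S m)%nat with (S (S i + m)) by lia.
    rewrite (integ_formula n M D (S i + m) x HM HD) by lia.
    rewrite (RInt_ext (V:=R_CompleteNormedModule) _ (fun _ => 0)). apply RInt_zero_fun.
    intros t _. apply IHm; lia. }
  unfold integRn. replace n with (S i + (n - S i))%nat by lia. apply Hc. lia.
Qed.


Lemma ca_const (n : nat) c x : cont_at n (fun _ => c) x.
Proof. intros eps He. exists 1. split. lra. intros. rewrite Rminus_diag, Rabs_R0; auto. Qed.

Lemma ca_coord (n : nat) i x : (i < n)%nat -> cont_at n (fun y => y i) x.
Proof. intros Hi eps He. exists eps. split; auto. intros y Hy. eapply Rle_lt_trans. apply (dist_coord n x y i Hi). auto. Qed.

Lemma ca_comp (n : nat) g F x : cont_at n F x -> continuity_pt g (F x) -> cont_at n (fun y => g (F y)) x.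
Proof.
  intros HF Hg eps He. destruct (cont_pt_elim g (F x) Hg eps He) as [d1 [Hd1 H1]].
  destruct (HF d1 Hd1) as [d [Hd H2]]. exists d. split; [exact Hd|]. intros y Hy. apply H1; apply H2; exact Hy.
Qed.

Lemma ca_plus (n : nat) F G x : cont_at n F x -> cont_at n G x -> cont_at n (fun y => F y + G y) x.
Proof.
  intros HF HG eps He. destruct (HF (eps/2) ltac:(lra)) as [d1 [Hd1 H1]]. destruct (HG (eps/2) ltac:(lra)) as [d2 [Hd2 H2]].
  exists (Rmin d1 d2). split. apply Rmin_pos; auto. intros y Hy.
  specialize (H1 y ltac:(pose proof (Rmin_l d1 d2); lra)). specialize (H2 y ltac:(pose proof (Rmin_r d1 d2); lra)).
  replace (F y + G y - (F x + G x)) with ((F y - F x) + (G y - G x)) by ring.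
  eapply Rle_lt_trans. apply Rabs_triang. lra.
Qed.

Lemma ca_mult (n : nat) F G x : cont_at n F x -> cont_at n G x -> cont_at n (fun y => F y * G y) x.
Proof.
  intros HF HG eps He.
  set (a := Rabs (F x) + 1). set (b := Rabs (G x) + 1).
  assert (Ha: 0 < a) by (unfold a; pose proof (Rabs_pos (F x)); lra).
  assert (Hb: 0 < b) by (unfold b; pose proof (Rabs_pos (G x)); lra).
  set (e := Rmin 1 (eps / (2*(a+b)))).
  assert (He': 0 < e) by (unfold e; apply Rmin_pos; [lra| apply Rdiv_lt_0_compat; lra]).
  assert (He1: e <= 1) by apply Rmin_l.
  assert (He2: e * (a + b) <= eps/2).
  { unfold e. apply Rle_trans with (eps / (2*(a+b)) * (a+b)). apply Rmult_le_compat_r. lra. apply Rmin_r.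
    right. field. lra. }
  clearbody e.
  destruct (HF e He') as [d1 [Hd1 H1]]. destruct (HG e He') as [d2 [Hd2 H2]].
  exists (Rmin d1 d2). split. apply Rmin_pos; auto. intros y Hy.
  specialize (H1 y ltac:(pose proof (Rmin_l d1 d2); lra)). specialize (H2 y ltac:(pose proof (Rmin_r d1 d2); lra)).
  replace (F y * G y - F x * G x) with ((F y - F x) * G y + F x * (G y - G x)) by ring.
  eapply Rle_lt_trans. apply Rabs_triang. rewrite !Rabs_mult.
  assert (HGy: Rabs (G y) <= b).
  { unfold b. replace (G y) with (G x + (G y - G x)) by ring. eapply Rle_trans. apply Rabs_triang. lra. }
  assert (P1: Rabs (F y - F x) * Rabs (G y) <= e * b).
  { apply Rmult_le_compat; try apply Rabs_pos; lra. }
  assert (P2: Rabs (F x) * Rabs (G y - G x) <= a * e).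
  { apply Rmult_le_compat; try apply Rabs_pos; unfold a; lra. }
  lra.
Qed.

Lemma ca_sumn (n : nat) m H x : (forall i, (i < m)%nat -> cont_at n (H i) x) -> cont_at n (fun y => sumn m (fun i => H i y)) x.
Proof.
  induction m; intros HH; simpl. apply (ca_const n). apply (ca_plus n). apply IHm; intros; apply HH; lia. apply HH; lia.
Qed.

Lemma ca_ext (n : nat) F G x : (forall y, F y = G y) -> cont_at n F x -> cont_at n G x.
Proof. intros E H eps He. destruct (H eps He) as [d [Hd Hy]]. exists d; split; auto. intros y; rewrite <- !E; auto. Qed.

Lemma ca_norm (n : nat) x : cont_at n (fun y => normn n y) x.
Proof.
  unfold normn. apply (ca_comp n sqrt). apply (ca_sumn n). intros i Hi. simpl.
  apply (ca_mult n). apply (ca_coord n); auto. apply (ca_mult n). apply (ca_coord n); auto. apply (ca_const n).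
  apply continuity_pt_sqrt. apply sumn_nonneg. intros; apply pow2_ge_0.
Qed.


Lemma dpl_ext f g x l : (forall t, f t = g t) -> derivable_pt_lim f x l -> derivable_pt_lim g x l.
Proof. intros E H. replace g with f; auto. apply functional_extensionality; auto. Qed.

Lemma dpl_mult f g x l1 l2 L : derivable_pt_lim f x l1 -> derivable_pt_lim g x l2 ->
  L = l1 * g x + f x * l2 -> derivable_pt_lim (fun t => f t * g t) x L.
Proof. intros H1 H2 ->. exact (derivable_pt_lim_mult f g x l1 l2 H1 H2). Qed.
Lemma dpl_plus f g x l1 l2 L : derivable_pt_lim f x l1 -> derivable_pt_lim g x l2 ->
  L = l1 + l2 -> derivable_pt_lim (fun t => f t + g t) x L.
Proof. intros H1 H2 ->. exact (derivable_pt_lim_plus f g x l1 l2 H1 H2). Qed.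
Lemma dpl_comp f g x l1 l2 L : derivable_pt_lim f x l1 -> derivable_pt_lim g (f x) l2 ->
  L = l2 * l1 -> derivable_pt_lim (fun t => g (f t)) x L.
Proof. intros H1 H2 ->. exact (derivable_pt_lim_comp f g x l1 l2 H1 H2). Qed.
Lemma dpl_const c x : derivable_pt_lim (fun _ => c) x 0.
Proof. apply derivable_pt_lim_const. Qed.
Lemma dpl_id x : derivable_pt_lim (fun t => t) x 1.
Proof. apply derivable_pt_lim_id. Qed.

Lemma loc_zero_deriv g t0 : (exists d, 0 < d /\ forall t, Rabs (t - t0) < d -> g t = 0) -> derivable_pt_lim g t0 0.
Proof.
  intros [d [Hd Hz]]. apply (is_derive_Reals g). apply is_derive_ext_loc with (fun _ => 0).
  - exists (mkposreal d Hd). intros y Hy. unfold ball in Hy; simpl in Hy; unfold AbsRing_ball, abs, minus, plus, opp in Hy; simpl in Hy.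
    symmetry. apply Hz. auto.
  - apply is_derive_Reals. apply dpl_const.
Qed.

Lemma norm_nonneg n x : 0 <= normn n x.
Proof. apply sqrt_pos. Qed.
Lemma norm_coord n x j : (j < n)%nat -> Rabs (x j) <= normn n x.
Proof.
  intros Hj. unfold normn. rewrite <- sqrt_Rsqr_abs. apply sqrt_le_1_alt.
  unfold Rsqr. replace (x j * x j) with ((fun i => x i ^ 2) j) by (simpl; ring).
  apply (sumn_term n (fun i => x i ^ 2) j); auto. intros; apply pow2_ge_0.
Qed.
Lemma norm_sq n x : normn n x * normn n x = sumn n (fun i => x i ^ 2).
Proof. unfold normn. apply sqrt_sqrt. apply sumn_nonneg; intros; apply pow2_ge_0. Qed.

Lemma norm_line n x i eps : 0 < eps -> exists d, 0 < d /\ forall t, Rabs (t - x i) < d -> Rabs (normn n (upd x i t) - normn n x) < eps.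
Proof.
  intros He. destruct (ca_norm n x eps He) as [d [Hd H]]. exists d; split; auto.
  intros t Ht. apply H. rewrite <- (upd_same x i) at 1. eapply Rle_lt_trans. apply dist_upd. rewrite distn_refl. lra.
Qed.

Definition fhyp n f r R0 := smoothn n f /\ 0 < r /\ forall x, (normn n x < r \/ R0 < normn n x) -> f x = 0.

Lemma f_cont n f r R0 : fhyp n f r R0 -> contn n f.
Proof. intros [Hs _]. exact (proj1 (Hs nil (Forall_nil _))). Qed.
Lemma partial_cont n f r R0 i : fhyp n f r R0 -> (i < n)%nat -> contn n (partial i f).
Proof. intros [Hs _] Hi. exact (proj1 (Hs (i :: nil) (Forall_cons (P:=fun i => (i < n)%nat) i Hi (Forall_nil _)))). Qed.
Lemma f_deriv n f r R0 i x : fhyp n f r R0 -> (i < n)%nat ->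
  derivable_pt_lim (fun t => f (upd x i t)) (x i) (partial i f x).
Proof.
  intros [Hs _] Hi. pose proof (proj2 (Hs nil (Forall_nil _)) i Hi x) as Hex. simpl in Hex.
  unfold partial. apply (epsilon_spec (inhabits 0) (fun L => derivable_pt_lim (fun t => f (upd x i t)) (x i) L) Hex).
Qed.
Lemma f_deriv' n f r R0 i x t : fhyp n f r R0 -> (i < n)%nat ->
  derivable_pt_lim (fun t => f (upd x i t)) t (partial i f (upd x i t)).
Proof.
  intros Hf Hi. pose proof (f_deriv n f r R0 i (upd x i t) Hf Hi) as H. rewrite upd_eq in H.
  eapply dpl_ext; [|exact H]. intros s; simpl. rewrite upd_upd; auto.
Qed.

Lemma f_zero_in n f r R0 x : fhyp n f r R0 -> normn n x < r -> f x = 0.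
Proof. intros [_ [_ Hz]] H. apply Hz; auto. Qed.
Lemma f_zero_out n f r R0 x : fhyp n f r R0 -> R0 < normn n x -> f x = 0.
Proof. intros [_ [_ Hz]] H. apply Hz; auto. Qed.

Lemma partial_zero n f r R0 i x : fhyp n f r R0 -> (i < n)%nat -> (normn n x < r \/ R0 < normn n x) -> partial i f x = 0.
Proof.
  intros Hf Hi Hx. apply (uniqueness_limite (fun t => f (upd x i t)) (x i)). eapply f_deriv; eauto.
  apply loc_zero_deriv. destruct Hx as [Hx|Hx].
  - destruct (norm_line n x i (r - normn n x) ltac:(lra)) as [d [Hd H]]. exists d; split; auto.
    intros t Ht. specialize (H t Ht). apply Rabs_def2 in H. eapply f_zero_in; eauto. lra.
  - destruct (norm_line n x i (normn n x - R0) ltac:(lra)) as [d [Hd H]]. exists d; split; auto.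
    intros t Ht. specialize (H t Ht). apply Rabs_def2 in H. eapply f_zero_out; eauto. lra.
Qed.

Lemma Good_annulus n r R0 F : 0 < r ->
  (forall x, normn n x < r -> F x = 0) -> (forall x, R0 < normn n x -> F x = 0) ->
  (forall x, 0 < normn n x -> cont_at n F x) -> Good n (Rmax R0 1) F.
Proof.
  intros Hr Hin Hout Hc. split.
  - apply contn_at. intros x. destruct (Rlt_dec (normn n x) r).
    + intros eps He. destruct (ca_norm n x (r - normn n x) ltac:(lra)) as [d [Hd H]].
      exists d; split; auto. intros y Hy. specialize (H y Hy). apply Rabs_def2 in H.
      rewrite (Hin x), (Hin y) by lra. rewrite Rminus_diag, Rabs_R0; auto.
    + apply Hc. lra.
  - intros x j _ Hj Hx. apply Hout. pose proof (norm_coord n x j Hj). pose proof (Rmax_l R0 1). lra.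
Qed.

Lemma deriv_S_gen x i t0 m : derivable_pt_lim (fun t => sumn m (fun j => upd x i t j ^ 2)) t0 (if Nat.ltb i m then 2*t0 else 0).
Proof.
  induction m; simpl. apply dpl_const.
  apply dpl_plus with (if Nat.ltb i m then 2*t0 else 0) (if Nat.eqb m i then 2*t0 else 0); auto.
  - unfold upd. destruct (Nat.eqb_spec m i).
    + apply dpl_ext with (fun t => t^2). intros; auto.
      apply dpl_eq with (INR 2 * t0 ^ Init.Nat.pred 2). apply derivable_pt_lim_pow. simpl; ring.
    + apply dpl_const.
  - destruct (Nat.ltb_spec i m), (Nat.ltb_spec i (S m)), (Nat.eqb_spec m i); try lia; ring.
Qed.

Lemma rpow_sqrt S m : 0 <= S -> rpow (sqrt S) m = rpow S (m/2).
Proof.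
  intros [HS|HS].
  - rewrite <- Rpower_sqrt by auto. rewrite <- (rpow_pos_eq S (/2)) by auto. rewrite rpow_rpow by lra. f_equal. field.
  - subst. rewrite sqrt_0, !rpow_nonpos; lra.
Qed.

Lemma deriv_rho_pow n x i m : (i < n)%nat -> 0 < normn n x ->
  derivable_pt_lim (fun t => rpow (normn n (upd x i t)) m) (x i) (m * x i * rpow (normn n x) (m-2)).
Proof.
  intros Hi Hx. unfold normn at 1.
  apply dpl_ext with (fun t => rpow (sumn n (fun j => upd x i t j ^ 2)) (m/2)).
  { intros t. rewrite rpow_sqrt; auto. apply sumn_nonneg; intros; apply pow2_ge_0. }
  assert (HS0: sumn n (fun j => upd x i (x i) j ^ 2) = normn n x * normn n x).
  { rewrite upd_same, norm_sq; auto. }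
  assert (Hpos: 0 < normn n x * normn n x) by nra.
  apply (dpl_comp (fun t => sumn n (fun j => upd x i t j ^ 2)) (fun a => rpow a (m/2)) (x i) (2 * x i) ((m/2) * Rpower (sumn n (fun j => upd x i (x i) j ^ 2)) (m/2 - 1))).
  - pose proof (deriv_S_gen x i (x i) n) as H. destruct (Nat.ltb_spec i n); [auto|lia].
  - apply derivable_rpow_pos. lra.
  - rewrite HS0. rewrite <- rpow_pos_eq by auto. rewrite <- rpow_2 by apply norm_nonneg.
    rewrite rpow_rpow by apply norm_nonneg. replace (2 * (m/2 - 1)) with (m-2) by field. field.
Qed.

Definition Gi n p f m i (x : nat -> R) := x i * rpow (normn n x) m * rpow (Rabs (f x)) p.
Definition Di n p f m i (x : nat -> R) :=
  (rpow (normn n x) m + x i * (m * x i * rpow (normn n x) (m-2))) * rpow (Rabs (f x)) p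
  + x i * rpow (normn n x) m * (p * psi p (f x) * partial i f x).

Lemma psi_0 p : psi p 0 = 0.
Proof. unfold psi; ring. Qed.
Lemma rpow_abs0 p : rpow (Rabs 0) p = 0.
Proof. rewrite Rabs_R0; apply rpow_nonpos; lra. Qed.

Lemma Gi_deriv n p f r R0 m i x : 2 <= p -> fhyp n f r R0 -> (i < n)%nat ->
  derivable_pt_lim (fun t => Gi n p f m i (upd x i t)) (x i) (Di n p f m i x).
Proof.
  intros Hp Hf Hi. destruct (Rlt_dec (normn n x) r).
  - assert (Hd: Di n p f m i x = 0).
    { unfold Di. rewrite (f_zero_in n f r R0 x) by auto. rewrite psi_0, rpow_abs0. ring. }
    rewrite Hd. apply loc_zero_deriv.
    destruct (norm_line n x i (r - normn n x) ltac:(lra)) as [d [Hd0 H]]. exists d; split; auto.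
    intros t Ht. specialize (H t Ht). apply Rabs_def2 in H. unfold Gi.
    rewrite (f_zero_in n f r R0 (upd x i t)) by (auto; lra). rewrite rpow_abs0. ring.
  - assert (Hx: 0 < normn n x) by (destruct Hf as [_ [Hr _]]; lra).
    unfold Gi, Di.
    apply (dpl_mult (fun t => upd x i t i * rpow (normn n (upd x i t)) m) (fun t => rpow (Rabs (f (upd x i t))) p) (x i)
       (rpow (normn n x) m + x i * (m * x i * rpow (normn n x) (m-2))) (p * psi p (f x) * partial i f x)).
    + apply (dpl_mult (fun t => upd x i t i) (fun t => rpow (normn n (upd x i t)) m) (x i) 1 (m * x i * rpow (normn n x) (m-2))).
      apply dpl_ext with (fun t => t). intros; rewrite upd_eq; auto. apply dpl_id.
      apply deriv_rho_pow; auto. rewrite upd_eq, upd_same. ring.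
    + apply (dpl_comp (fun t => f (upd x i t)) (fun a => rpow (Rabs a) p) (x i) (partial i f x) (p * psi p (f x))).
      eapply f_deriv; eauto. rewrite upd_same. apply deriv_rpow_abs; lra. ring.
    + rewrite upd_eq, upd_same. ring.
Qed.

Lemma ca_f n f r R0 x : fhyp n f r R0 -> cont_at n f x.
Proof. intros Hf. apply (proj1 (contn_at n f)). eapply f_cont; eauto. Qed.
Lemma ca_partial n f r R0 i x : fhyp n f r R0 -> (i < n)%nat -> cont_at n (partial i f) x.
Proof. intros Hf Hi. apply (proj1 (contn_at n _)). eapply partial_cont; eauto. Qed.
Lemma ca_rho_pow n m x : 0 < normn n x -> cont_at n (fun y => rpow (normn n y) m) x.
Proof. intros Hx. apply (ca_comp n (fun a => rpow a m)). apply ca_norm. apply cont_rpow_pos; auto. Qed.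
Lemma ca_fpow n f r R0 p x : 0 < p -> fhyp n f r R0 -> cont_at n (fun y => rpow (Rabs (f y)) p) x.
Proof. intros Hp Hf. apply (ca_comp n (fun a => rpow (Rabs a) p)). eapply ca_f; eauto. apply cont_rpow_abs; auto. Qed.
Lemma ca_psi n f r R0 p x : 1 < p -> fhyp n f r R0 -> cont_at n (fun y => psi p (f y)) x.
Proof. intros Hp Hf. apply (ca_comp n (psi p)). eapply ca_f; eauto. apply cont_psi; auto. Qed.

Lemma Gi_good n p f r R0 m i : 2 <= p -> fhyp n f r R0 -> (i < n)%nat -> Good n (Rmax R0 1) (Gi n p f m i).
Proof.
  intros Hp Hf Hi. pose proof Hf as [_ [Hr _]]. apply (Good_annulus n r R0); auto.
  - intros x Hx. unfold Gi. rewrite (f_zero_in n f r R0 x), rpow_abs0 by auto. ring.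
  - intros x Hx. unfold Gi. rewrite (f_zero_out n f r R0 x), rpow_abs0 by auto. ring.
  - intros x Hx. unfold Gi. apply ca_mult. apply ca_mult. apply ca_coord; auto. apply ca_rho_pow; auto.
    eapply ca_fpow; eauto; lra.
Qed.

Lemma Di_good n p f r R0 m i : 2 <= p -> fhyp n f r R0 -> (i < n)%nat -> Good n (Rmax R0 1) (Di n p f m i).
Proof.
  intros Hp Hf Hi. pose proof Hf as [_ [Hr _]]. apply (Good_annulus n r R0); auto.
  - intros x Hx. unfold Di. rewrite (f_zero_in n f r R0 x), rpow_abs0, psi_0 by auto. ring.
  - intros x Hx. unfold Di. rewrite (f_zero_out n f r R0 x), rpow_abs0, psi_0 by auto. ring.
  - intros x Hx. unfold Di. apply ca_plus. apply ca_mult. apply ca_plus. apply ca_rho_pow; auto.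
    apply ca_mult. apply ca_coord; auto. apply ca_mult. apply ca_mult. apply ca_const. apply ca_coord; auto.
    apply ca_rho_pow; auto. eapply ca_fpow; eauto; lra.
    apply ca_mult. apply ca_mult. apply ca_coord; auto. apply ca_rho_pow; auto.
    apply ca_mult. apply ca_mult. apply ca_const. eapply ca_psi; eauto; lra. eapply ca_partial; eauto.
Qed.

Lemma sumn_const n c : sumn n (fun _ => c) = INR n * c.
Proof. induction n; simpl sumn. simpl; ring. rewrite IHn, S_INR; ring. Qed.

Definition S1 n f (x : nat -> R) := sumn n (fun i => x i * partial i f x).

Lemma sum_Di n p f m x :
  sumn n (fun i => Di n p f m i x) =
  (INR n + m) * rpow (normn n x) m * rpow (Rabs (f x)) p + p * rpow (normn n x) m * psi p (f x) * S1 n f x.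
Proof.
  set (R := normn n x). set (a := rpow R m * rpow (Rabs (f x)) p).
  set (b := m * rpow R (m-2) * rpow (Rabs (f x)) p). set (c := p * rpow R m * psi p (f x)).
  rewrite (sumn_ext n _ (fun i => (a + b * x i ^ 2) + c * (x i * partial i f x))).
  2:{ intros i _. unfold Di, a, b, c, R. ring. }
  rewrite sumn_plus, sumn_plus, sumn_const, sumn_scal, sumn_scal. fold (S1 n f x).
  rewrite <- norm_sq. fold R.
  assert (E: R * R * rpow R (m-2) = rpow R m).
  { unfold R. rewrite <- rpow_2 by apply norm_nonneg. rewrite <- rpow_plus by apply norm_nonneg. f_equal; ring. }
  unfold a, b, c. replace (m * rpow R (m - 2) * rpow (Rabs (f x)) p * (R * R)) with (m * (R * R * rpow R (m-2)) * rpow (Rabs (f x)) p) by ring.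
  rewrite E. ring.
Qed.

Lemma div_lemma n p f r R0 m : 2 <= p -> fhyp n f r R0 ->
  integRn n (fun x => (INR n + m) * rpow (normn n x) m * rpow (Rabs (f x)) p + p * rpow (normn n x) m * psi p (f x) * S1 n f x) = 0.
Proof.
  intros Hp Hf. set (M := Rmax R0 1). assert (HM: 0 < M) by (unfold M; pose proof (Rmax_r R0 1); lra).
  transitivity (integRn n (fun x => sumn n (fun i => Di n p f m i x))).
  { unfold integRn. f_equal. apply functional_extensionality; intros x. symmetry; apply sum_Di. }
  unfold integRn. rewrite (integ_sumn n M n (fun i => Di n p f m i)); auto.
  rewrite (sumn_ext n _ (fun _ => 0)). rewrite sumn_const; ring.
  intros i Hi. apply (integ_deriv_zero n M (Gi n p f m i) (Di n p f m i) i); auto.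
  eapply Gi_good; eauto. eapply Di_good; eauto. intros x; eapply Gi_deriv; eauto.
  intros i Hi. eapply Di_good; eauto.
Qed.

Definition E0f n p al f x := rpow (gradnorm n f x) p / rpow (normn n x) (al*p).
Definition T1f n p al (f : (nat -> R) -> R) x := rpow (Rabs (f x)) p / rpow (normn n x) ((al+1)*p).
Definition X0f n p (f : (nat -> R) -> R) m x := (INR n + m) * rpow (normn n x) m * rpow (Rabs (f x)) p + p * rpow (normn n x) m * psi p (f x) * S1 n f x.
Definition Bf n f g x := (S1 n f x + g * f x) / normn n x.
Definition Dtf n p al f g x := rpow (Rabs (Bf n f g x)) p * rpow (normn n x) (-(al*p)).
Definition Nf n p (f : (nat -> R) -> R) d x := rpow (Rabs (f x)) p * rpow (normn n x) d.
Definition hf n p f g d x := psi p (f x) * (S1 n f x + g * f x) * rpow (normn n x) d.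

Lemma zero_region n f r R0 x : fhyp n f r R0 -> (normn n x < r \/ R0 < normn n x) ->
  f x = 0 /\ gradnorm n f x = 0 /\ S1 n f x = 0.
Proof.
  intros Hf Hx. pose proof Hf as [_ [_ Hz]]. split. apply Hz; auto.
  assert (Hp: forall i, (i < n)%nat -> partial i f x = 0) by (intros; eapply partial_zero; eauto).
  split.
  - unfold gradnorm. rewrite (sumn_ext n _ (fun _ => 0)). rewrite sumn_const, Rmult_0_r. apply sqrt_0.
    intros i Hi. rewrite Hp; auto; ring.
  - unfold S1. rewrite (sumn_ext n _ (fun _ => 0)). rewrite sumn_const; ring. intros i Hi. rewrite Hp; auto; ring.
Qed.

Lemma ca_div n F G x : cont_at n F x -> cont_at n G x -> G x <> 0 -> cont_at n (fun y => F y / G y) x.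
Proof.
  intros HF HG Hx. unfold Rdiv. apply ca_mult; auto. apply (ca_comp n Rinv); auto. apply continuity_pt_inv; auto.
  apply continuity_pt_id.
Qed.

Lemma ca_S1 n f r R0 x : fhyp n f r R0 -> cont_at n (S1 n f) x.
Proof. intros Hf. unfold S1. apply ca_sumn. intros i Hi. apply ca_mult. apply ca_coord; auto. eapply ca_partial; eauto. Qed.

Lemma ca_gn n f r R0 x : fhyp n f r R0 -> cont_at n (gradnorm n f) x.
Proof.
  intros Hf. unfold gradnorm. apply (ca_comp n sqrt). apply ca_sumn. intros i Hi. simpl.
  apply ca_mult. eapply ca_partial; eauto. apply ca_mult. eapply ca_partial; eauto. apply ca_const.
  apply continuity_pt_sqrt. apply sumn_nonneg. intros; apply pow2_ge_0.
Qed.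

Lemma rpow_pos_ne n x q : 0 < normn n x -> rpow (normn n x) q <> 0.
Proof. intros H. pose proof (rpow_gt0 _ q H). lra. Qed.

Ltac zr Hf x Hx := destruct (zero_region _ _ _ _ x Hf ltac:(auto)) as [Z1 [Z2 Z3]].

Lemma E0_good n p al f r R0 : 2 <= p -> fhyp n f r R0 -> Good n (Rmax R0 1) (E0f n p al f).
Proof.
  intros Hp Hf. pose proof Hf as [_ [Hr _]]. apply (Good_annulus n r R0); auto.
  - intros x Hx. zr Hf x Hx. unfold E0f. rewrite Z2, rpow_nonpos by lra. unfold Rdiv; ring.
  - intros x Hx. zr Hf x Hx. unfold E0f. rewrite Z2, rpow_nonpos by lra. unfold Rdiv; ring.
  - intros x Hx. unfold E0f. apply ca_div. apply (ca_comp n (fun a => rpow a p)). eapply ca_gn; eauto.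
    apply cont_rpow_nonneg. lra. apply sqrt_pos. apply ca_rho_pow; auto. apply rpow_pos_ne; auto.
Qed.

Lemma T1_good n p al f r R0 : 2 <= p -> fhyp n f r R0 -> Good n (Rmax R0 1) (T1f n p al f).
Proof.
  intros Hp Hf. pose proof Hf as [_ [Hr _]]. apply (Good_annulus n r R0); auto.
  - intros x Hx. zr Hf x Hx. unfold T1f. rewrite Z1, rpow_abs0. unfold Rdiv; ring.
  - intros x Hx. zr Hf x Hx. unfold T1f. rewrite Z1, rpow_abs0. unfold Rdiv; ring.
  - intros x Hx. unfold T1f. apply ca_div. eapply ca_fpow; eauto; lra. apply ca_rho_pow; auto. apply rpow_pos_ne; auto.
Qed.

Lemma X0_good n p f r R0 m : 2 <= p -> fhyp n f r R0 -> Good n (Rmax R0 1) (X0f n p f m).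
Proof.
  intros Hp Hf. pose proof Hf as [_ [Hr _]]. apply (Good_annulus n r R0); auto.
  - intros x Hx. zr Hf x Hx. unfold X0f. rewrite Z1, Z3, rpow_abs0. ring.
  - intros x Hx. zr Hf x Hx. unfold X0f. rewrite Z1, Z3, rpow_abs0. ring.
  - intros x Hx. unfold X0f. apply ca_plus. apply ca_mult. apply ca_mult. apply ca_const. apply ca_rho_pow; auto.
    eapply ca_fpow; eauto; lra. apply ca_mult. apply ca_mult. apply ca_mult. apply ca_const. apply ca_rho_pow; auto.
    eapply ca_psi; eauto; lra. eapply ca_S1; eauto.
Qed.

Lemma Dt_good n p al f g r R0 : 2 <= p -> fhyp n f r R0 -> Good n (Rmax R0 1) (Dtf n p al f g).
Proof.
  intros Hp Hf. pose proof Hf as [_ [Hr _]]. apply (Good_annulus n r R0); auto.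
  - intros x Hx. zr Hf x Hx. unfold Dtf, Bf. rewrite Z1, Z3. replace ((0 + g*0) / normn n x) with 0 by (unfold Rdiv; ring). rewrite rpow_abs0. ring.
  - intros x Hx. zr Hf x Hx. unfold Dtf, Bf. rewrite Z1, Z3. replace ((0 + g*0) / normn n x) with 0 by (unfold Rdiv; ring). rewrite rpow_abs0. ring.
  - intros x Hx. unfold Dtf, Bf. apply ca_mult. apply (ca_comp n (fun a => rpow (Rabs a) p)).
    apply ca_div. apply ca_plus. eapply ca_S1; eauto. apply ca_mult. apply ca_const. eapply ca_f; eauto.
    apply ca_norm. lra. apply cont_rpow_abs; lra. apply ca_rho_pow; auto.
Qed.

Lemma N_good n p f r R0 d : 2 <= p -> fhyp n f r R0 -> Good n (Rmax R0 1) (Nf n p f d).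
Proof.
  intros Hp Hf. pose proof Hf as [_ [Hr _]]. apply (Good_annulus n r R0); auto.
  - intros x Hx. zr Hf x Hx. unfold Nf. rewrite Z1, rpow_abs0. ring.
  - intros x Hx. zr Hf x Hx. unfold Nf. rewrite Z1, rpow_abs0. ring.
  - intros x Hx. unfold Nf. apply ca_mult. eapply ca_fpow; eauto; lra. apply ca_rho_pow; auto.
Qed.

Lemma h_good n p f g r R0 d : 2 <= p -> fhyp n f r R0 -> Good n (Rmax R0 1) (hf n p f g d).
Proof.
  intros Hp Hf. pose proof Hf as [_ [Hr _]]. apply (Good_annulus n r R0); auto.
  - intros x Hx. zr Hf x Hx. unfold hf. rewrite Z1, Z3, psi_0. ring.
  - intros x Hx. zr Hf x Hx. unfold hf. rewrite Z1, Z3, psi_0. ring.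
  - intros x Hx. unfold hf. apply ca_mult. apply ca_mult. eapply ca_psi; eauto; lra.
    apply ca_plus. eapply ca_S1; eauto. apply ca_mult. apply ca_const. eapply ca_f; eauto. apply ca_rho_pow; auto.
Qed.

Lemma cs n a b : (sumn n (fun i => a i * b i))^2 <= sumn n (fun i => a i ^2) * sumn n (fun i => b i ^2).
Proof.
  set (A := sumn n (fun i => a i ^2)). set (B := sumn n (fun i => b i ^2)). set (C := sumn n (fun i => a i * b i)).
  assert (HB: 0 <= B) by (apply sumn_nonneg; intros; apply pow2_ge_0).
  assert (HA: 0 <= A) by (apply sumn_nonneg; intros; apply pow2_ge_0).
  assert (H0: 0 <= sumn n (fun i => (B * a i - C * b i)^2)) by (apply sumn_nonneg; intros; apply pow2_ge_0).
  rewrite (sumn_ext n _ (fun i => (B*B) * a i ^2 + ((-2*B*C) * (a i * b i) + (C*C) * b i ^2))) in H0.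
  2:{ intros; ring. }
  rewrite !sumn_plus, !sumn_scal in H0. fold A B C in H0.
  destruct HB as [HB|HB].
  - assert (B * (A*B - C*C) >= 0) by nra. assert (A*B - C*C >= 0). 
    { destruct (Rle_dec 0 (A*B - C*C)); auto. lra. nra. }
    nra.
  - assert (HC: C = 0).
    { unfold C. rewrite (sumn_ext n _ (fun _ => 0)). clear. induction n; simpl; lra.
      intros i Hi. assert (b i ^2 <= B) by (apply (sumn_term n (fun i => b i ^2) i); auto; intros; apply pow2_ge_0).
      assert (b i = 0) by nra. rewrite H1; ring. }
    rewrite HC. nra.
Qed.

Lemma S1_bound n f x : Rabs (S1 n f x) <= normn n x * gradnorm n f x.
Proof.
  unfold S1, normn, gradnorm. rewrite <- sqrt_mult by (apply sumn_nonneg; intros; apply pow2_ge_0).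
  rewrite <- sqrt_Rsqr_abs. apply sqrt_le_1_alt. unfold Rsqr.
  pose proof (cs n (fun i => x i) (fun i => partial i f x)) as H. eapply Rle_trans; [|exact H]. right; ring.
Qed.

Lemma PI1 n p al c f g x : 2 <= p -> is_cp p c -> 0 < g -> g = (INR n - p - al*p)/p ->
  Rpower g p * T1f n p al f x - Rpower g (p-1) * X0f n p f (-(al*p) - p) x + c * Dtf n p al f g x <= E0f n p al f x.
Proof.
  intros Hp Hc Hg Hgd. unfold T1f, X0f, Dtf, E0f.
  destruct (norm_nonneg n x) as [HR|HR].
  2:{ rewrite <- HR. rewrite !(rpow_nonpos 0) by lra. unfold Rdiv. rewrite !Rinv_0. lra. }
  set (R := normn n x) in *. set (Q := rpow R (al*p)). set (P := rpow R p).
  assert (HQ: 0 < Q) by (apply rpow_gt0; auto). assert (HP: 0 < P) by (apply rpow_gt0; auto).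
  assert (f1: rpow R ((al+1)*p) = Q*P) by (unfold Q, P; rewrite <- rpow_plus by lra; f_equal; ring).
  assert (f2: rpow R (-(al*p) - p) = /(Q*P)) by (rewrite <- f1, <- rpow_opp by lra; f_equal; ring).
  assert (f3: rpow R (-(al*p)) = /Q) by (unfold Q; rewrite rpow_opp by lra; auto).
  assert (Hm0: INR n + (-(al*p) - p) = p * g) by (rewrite Hgd; field; lra).
  set (Gp := Rpower g p). assert (HGp: 0 < Gp) by apply Rpower_pos.
  assert (e4: Rpower g (p-1) = Gp / g) by (unfold Gp; rewrite (Rpower_split g p) by auto; field; lra).
  set (a := - g * f x / R). set (Bv := Bf n f g x). set (S := S1 n f x).
  assert (HBv: Bv = (S + g * f x) / R) by auto.
  pose proof (scalar_ineq p c a Bv Hp Hc) as sc.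
  replace (a + Bv) with (S / R) in sc by (rewrite HBv; unfold a; field; lra).
  assert (e1: rpow (Rabs a) p = Gp * rpow (Rabs (f x)) p / P).
  { unfold a. replace (Rabs (- g * f x / R)) with (g * Rabs (f x) * / R).
    2:{ unfold Rdiv. rewrite !Rabs_mult, Rabs_Ropp, Rabs_inv, (Rabs_pos_eq g), (Rabs_pos_eq R); lra. }
    rewrite !rpow_mult, rpow_inv by (try apply Rmult_le_pos; try apply Rabs_pos; try apply Rlt_le, Rinv_0_lt_compat; lra).
    unfold Gp, P. rewrite rpow_pos_eq by auto. unfold Rdiv; ring. }
  assert (e2: psi p a = -(Gp * R / (P * g)) * psi p (f x)).
  { unfold psi, a. replace (Rabs (- g * f x / R)) with (g * Rabs (f x) * / R).
    2:{ unfold Rdiv. rewrite !Rabs_mult, Rabs_Ropp, Rabs_inv, (Rabs_pos_eq g), (Rabs_pos_eq R); lra. }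
    rewrite !rpow_mult, rpow_inv by (try apply Rmult_le_pos; try apply Rabs_pos; try apply Rlt_le, Rinv_0_lt_compat; lra).
    assert (EG: Gp = rpow g (p-2) * (g*g)).
    { unfold Gp. rewrite <- rpow_pos_eq by auto. rewrite <- rpow_2, <- rpow_plus by lra. f_equal; ring. }
    assert (EP: P = rpow R (p-2) * (R*R)).
    { unfold P. rewrite <- rpow_2, <- rpow_plus by lra. f_equal; ring. }
    rewrite EG, EP. pose proof (rpow_gt0 R (p-2) HR). field. lra. }
  assert (e3: rpow (Rabs (f x)) p = psi p (f x) * f x) by (symmetry; apply psi_mul_self).
  assert (mono: rpow (Rabs (S / R)) p <= rpow (gradnorm n f x) p).
  { apply rpow_le_base. lra. split. apply Rabs_pos. unfold Rdiv. rewrite Rabs_mult, Rabs_inv, (Rabs_pos_eq R) by lra.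
    pose proof (S1_bound n f x). fold R S in H. apply Rmult_le_reg_r with R; auto.
    replace (Rabs S * / R * R) with (Rabs S) by (field; lra). lra. }
  rewrite f1, f2, f3, e4, Hm0. rewrite e1, e2 in sc. rewrite HBv in sc.
  apply Rle_trans with ((Gp * rpow (Rabs (f x)) p / P + p * (- (Gp * R / (P * g)) * psi p (f x)) * ((S + g * f x) / R) +
      c * rpow (Rabs Bv) p) / Q).
  - right. rewrite e3. field. repeat split; lra.
  - unfold Rdiv at 1 2. apply Rle_trans with (rpow (Rabs (S / R)) p * / Q); apply Rmult_le_compat_r; try (apply Rlt_le, Rinv_0_lt_compat; auto); auto.
Qed.

Lemma PI2_id n p f g d1 x :
  (INR n + d1 - p*g) * Nf n p f d1 x = X0f n p f d1 x - p * hf n p f g d1 x.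
Proof.
  unfold Nf, X0f, hf. rewrite <- (psi_mul_self p (f x)). ring.
Qed.

Lemma PI2_young n p al f g d1 d2 eps x : 2 <= p -> 0 < eps -> d2 = (d1 + 1 + al) * (p/(p-1)) ->
  Rabs (p * hf n p f g d1 x) <= rpow eps p * Dtf n p al f g x + (p-1) * rpow (/eps) (p/(p-1)) * Nf n p f d2 x.
Proof.
  intros Hp He Hd2. unfold hf, Dtf, Nf.
  assert (Hq: 0 < p/(p-1)) by (apply Rdiv_lt_0_compat; lra).
  assert (Hrhs: 0 <= rpow eps p * (rpow (Rabs (Bf n f g x)) p * rpow (normn n x) (- (al * p))) +
      (p - 1) * rpow (/ eps) (p / (p - 1)) * (rpow (Rabs (f x)) p * rpow (normn n x) d2)).
  { pose proof (rpow_ge0 eps p). pose proof (rpow_ge0 (Rabs (Bf n f g x)) p). pose proof (rpow_ge0 (normn n x) (- (al * p))).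
    pose proof (rpow_ge0 (/eps) (p/(p-1))). pose proof (rpow_ge0 (Rabs (f x)) p). pose proof (rpow_ge0 (normn n x) d2).
    apply Rplus_le_le_0_compat; repeat apply Rmult_le_pos; lra. }
  destruct (norm_nonneg n x) as [HR|HR].
  2:{ rewrite <- HR in *. rewrite (rpow_nonpos 0 d1) by lra. rewrite Rmult_0_r, Rmult_0_r, Rabs_R0. exact Hrhs. }
  set (R := normn n x) in *. set (Bv := Bf n f g x). set (S := S1 n f x).
  assert (HBv: Rabs (S + g * f x) = Rabs Bv * R).
  { unfold Bv, Bf. fold S R. unfold Rdiv. rewrite Rabs_mult, Rabs_inv, (Rabs_pos_eq R) by lra. field. lra. }
  set (U1 := eps * Rabs Bv * rpow R (-al)). set (V1 := /eps * rpow (Rabs (f x)) (p-1) * rpow R (d1+1+al)).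
  assert (HU: 0 <= U1) by (unfold U1; pose proof (Rabs_pos Bv); pose proof (rpow_ge0 R (-al)); apply Rmult_le_pos; [apply Rmult_le_pos|]; lra).
  assert (HV: 0 <= V1) by (unfold V1; pose proof (rpow_ge0 (Rabs (f x)) (p-1)); pose proof (rpow_ge0 R (d1+1+al)); pose proof (Rinv_0_lt_compat eps He); apply Rmult_le_pos; [apply Rmult_le_pos|]; lra).
  pose proof (young p U1 V1 ltac:(lra) HU HV) as Y.
  assert (EUV: Rabs (psi p (f x) * (S + g * f x) * rpow R d1) = U1 * V1).
  { rewrite !Rabs_mult, abs_psi, HBv, (Rabs_pos_eq (rpow R d1)) by apply rpow_ge0.
    unfold U1, V1. replace (eps * Rabs Bv * rpow R (- al) * (/ eps * rpow (Rabs (f x)) (p - 1) * rpow R (d1 + 1 + al)))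
      with (Rabs Bv * rpow (Rabs (f x)) (p - 1) * (rpow R (- al) * rpow R (d1 + 1 + al))) by (field; lra).
    rewrite <- rpow_plus by lra. replace (- al + (d1 + 1 + al)) with (d1 + 1) by ring.
    rewrite rpow_plus, rpow_1 by lra. ring. }
  assert (EU: rpow U1 p = rpow eps p * (rpow (Rabs Bv) p * rpow R (- (al * p)))).
  { unfold U1. rewrite !rpow_mult by (try apply Rmult_le_pos; try apply Rabs_pos; try apply rpow_ge0; lra).
    rewrite rpow_rpow by lra. replace (-al*p) with (-(al*p)) by ring. ring. }
  assert (EV: rpow V1 (p/(p-1)) = rpow (/eps) (p/(p-1)) * (rpow (Rabs (f x)) p * rpow R d2)).
  { unfold V1. rewrite !rpow_mult by (try apply Rmult_le_pos; try apply Rabs_pos; try apply rpow_ge0; try apply Rlt_le, Rinv_0_lt_compat; lra).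
    rewrite !rpow_rpow by (try apply Rabs_pos; lra). replace ((p-1) * (p/(p-1))) with p by (field; lra).
    rewrite Hd2. ring. }
  rewrite Rabs_mult, (Rabs_pos_eq p) by lra. rewrite EUV.
  rewrite EU, EV in Y.
  apply Rle_trans with (p * (rpow eps p * (rpow (Rabs Bv) p * rpow R (- (al * p))) / p +
    rpow (/ eps) (p / (p - 1)) * (rpow (Rabs (f x)) p * rpow R d2) / (p / (p - 1)))).
  apply Rmult_le_compat_l; lra. right. field. lra.
Qed.

Lemma rpow_split1 a q : 0 <= a -> rpow a (1 + q) = a * rpow a q.
Proof. intros Ha. rewrite rpow_plus, rpow_1; auto. Qed.

Lemma final_alg p k c Dd Nn Mm : 2 <= p -> 0 <= k -> 0 <= c -> 0 <= Dd -> 0 <= Nn -> 0 <= Mm ->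
  (forall eps, 0 < eps -> p * k * Nn <= rpow eps p * Dd + (p-1) * rpow (/eps) (p/(p-1)) * Mm) ->
  c * rpow k p * rpow Nn p / rpow Mm (p-1) <= c * Dd.
Proof.
  intros Hp Hk Hc HD HN HMm Hyp.
  destruct Hk as [Hk|Hk]. 2:{ subst. rewrite (rpow_nonpos 0) by lra. unfold Rdiv. rewrite !Rmult_0_r, Rmult_0_l. nra. }
  destruct HN as [HN|HN]. 2:{ subst. rewrite (rpow_nonpos 0) by lra. unfold Rdiv. rewrite Rmult_0_r, Rmult_0_l. nra. }
  destruct HMm as [HM|HM]. 2:{ subst. rewrite (rpow_nonpos 0) by lra. unfold Rdiv. rewrite Rinv_0, Rmult_0_r. nra. }
  set (w := k * Nn / Mm). assert (Hw: 0 < w) by (unfold w; apply Rdiv_lt_0_compat; nra).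
  set (eps := rpow w (-((p-1)/p))). assert (He: 0 < eps) by (apply rpow_gt0; auto).
  specialize (Hyp eps He).
  assert (E1: rpow eps p = / rpow w (p-1)).
  { unfold eps. rewrite rpow_rpow by lra. rewrite <- rpow_opp by lra. f_equal. field. lra. }
  assert (E2: rpow (/eps) (p/(p-1)) = w).
  { rewrite rpow_inv by lra. unfold eps. rewrite rpow_rpow by lra.
    replace (- ((p - 1) / p) * (p / (p - 1))) with (-(1)) by (field; lra).
    rewrite rpow_opp, rpow_1 by lra. field. lra. }
  rewrite E1, E2 in Hyp.
  set (W := rpow w (p-1)). assert (HW: 0 < W) by (apply rpow_gt0; auto).
  assert (HDd: k * Nn * W <= Dd).
  { assert (E3: (p-1) * w * Mm = (p-1)*(k*Nn)) by (unfold w; field; lra).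
    fold W in Hyp. assert (H0: k * Nn <= /W * Dd) by lra.
    apply Rmult_le_reg_r with (/W). apply Rinv_0_lt_compat; auto.
    replace (k * Nn * W * / W) with (k*Nn) by (field; lra). lra. }
  assert (EW: rpow k p * rpow Nn p / rpow Mm (p-1) = k * Nn * W).
  { unfold W, w. unfold Rdiv. rewrite !rpow_mult, rpow_inv by (try apply Rmult_le_pos; try apply Rlt_le, Rinv_0_lt_compat; lra).
    replace p with (1 + (p-1)) at 1 2 by ring. rewrite !rpow_split1 by lra. ring. }
  replace (c * rpow k p * rpow Nn p / rpow Mm (p-1)) with (c * (rpow k p * rpow Nn p / rpow Mm (p-1))) by (unfold Rdiv; ring).
  rewrite EW. apply Rmult_le_compat_l; lra.
Qed.

Lemma I_lin n M F G a b : 0 < M -> Good n M F -> Good n M G ->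
  integRn n (fun x => a * F x + b * G x) = a * integRn n F + b * integRn n G.
Proof. intros. unfold integRn. apply (integ_lin n M); auto. Qed.
Lemma I_scal n M F a : 0 < M -> Good n M F -> integRn n (fun x => a * F x) = a * integRn n F.
Proof.
  intros HM HF. transitivity (integRn n (fun x => a * F x + 0 * F x)).
  { f_equal. apply functional_extensionality; intros; ring. }
  rewrite (I_lin n M); auto. ring.
Qed.
Lemma I_mono n M F G : 0 < M -> Good n M F -> Good n M G -> (forall x, F x <= G x) -> integRn n F <= integRn n G.
Proof. intros. unfold integRn. apply (integ_mono n M); auto. Qed.
Lemma I_ext n F G : (forall x, F x = G x) -> integRn n F = integRn n G.
Proof. intros E. f_equal. apply functional_extensionality; auto. Qed.
Lemma I_nonneg n M F : 0 < M -> Good n M F -> (forall x, 0 <= F x) -> 0 <= integRn n F.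
Proof.
  intros HM HF H. replace 0 with (integRn n (fun _ => 0)). apply (I_mono n M); auto. apply Good_zero.
  unfold integRn. apply integ_zero_fun.
Qed.

Theorem mainTheorem4 (n : nat) (p alpha b cp : R)
  (hn : (3 <= n)%nat) (hp2 : 2 <= p) (hpn : p < INR n)
  (halpha : alpha < (INR n - p) / p)
  (hcp : is_cp p cp)
  (f : (nat -> R) -> R) (hf : C0inf_punct n f) :
  let delta1 := INR n - p - alpha * p - (INR n + p * b) / p in
  let delta2 := INR n - p - alpha * p - b * p / (p - 1) in
  let Cp := cp * rpow (Rabs ((INR n * (p - 1) - p * b) / p ^ 2)) p in
  integRn n (fun x => rpow (gradnorm n f x) p / rpow (normn n x) (alpha * p))
  - Rpower ((INR n - p - alpha * p) / p) p
    * integRn n (fun x => rpow (Rabs (f x)) p / rpow (normn n x) ((alpha + 1) * p))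
  >= Cp * rpow (integRn n (fun x => rpow (Rabs (f x)) p * rpow (normn n x) delta1)) p
        / rpow (integRn n (fun x => rpow (Rabs (f x)) p * rpow (normn n x) delta2)) (p - 1).
Proof.
  intros delta1 delta2 Cp.
  destruct hf as [Hs [r [R0 [Hr Hz]]]].
  assert (Hf: fhyp n f r R0) by (split; [|split]; auto).
  set (M := Rmax R0 1). assert (HM: 0 < M) by (unfold M; pose proof (Rmax_r R0 1); lra).
  assert (Hpos: 0 < INR n - p - alpha*p).
  { apply Rmult_lt_compat_r with (r := p) in halpha; [|lra]. unfold Rdiv in halpha.
    rewrite Rmult_assoc, Rinv_l, Rmult_1_r in halpha by lra. lra. }
  set (g := (INR n - p - alpha * p) / p). assert (Hg: 0 < g) by (unfold g; apply Rdiv_lt_0_compat; lra).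
  pose proof (cp_nonneg p cp hp2 hcp) as Hc0.
  change (integRn n (E0f n p alpha f) - Rpower g p * integRn n (T1f n p alpha f) >=
    Cp * rpow (integRn n (Nf n p f delta1)) p / rpow (integRn n (Nf n p f delta2)) (p-1)).
  pose proof (E0_good n p alpha f r R0 hp2 Hf) as GE. pose proof (T1_good n p alpha f r R0 hp2 Hf) as GT.
  pose proof (X0_good n p f r R0 (-(alpha*p) - p) hp2 Hf) as GX0. pose proof (Dt_good n p alpha f g r R0 hp2 Hf) as GD.
  pose proof (N_good n p f r R0 delta1 hp2 Hf) as GN1. pose proof (N_good n p f r R0 delta2 hp2 Hf) as GN2.
  pose proof (X0_good n p f r R0 delta1 hp2 Hf) as GX1. pose proof (h_good n p f g r R0 delta1 hp2 Hf) as Gh.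
  fold M in GE, GT, GX0, GD, GN1, GN2, GX1, Gh.
  set (Gp := Rpower g p). set (Gq := Rpower g (p-1)).
  assert (IX0: integRn n (X0f n p f (-(alpha*p) - p)) = 0) by (unfold X0f; eapply div_lemma; eauto).
  assert (StepA: cp * integRn n (Dtf n p alpha f g) <= integRn n (E0f n p alpha f) - Gp * integRn n (T1f n p alpha f)).
  { set (F1 := fun x => Gp * T1f n p alpha f x + (- Gq) * X0f n p f (-(alpha*p) - p) x).
    assert (GF1: Good n M F1) by (apply Good_lin; auto).
    assert (Hle: integRn n (fun x => 1 * F1 x + cp * Dtf n p alpha f g x) <= integRn n (E0f n p alpha f)).
    { apply (I_mono n M); auto. apply Good_lin; auto. intros x. unfold F1.
      pose proof (PI1 n p alpha cp f g x hp2 hcp Hg eq_refl). fold Gp Gq in H. lra. }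
    rewrite (I_lin n M) in Hle by auto. unfold F1 in Hle. rewrite (I_lin n M) in Hle by auto.
    rewrite IX0 in Hle. lra. }
  set (K := INR n + delta1 - p*g).
  set (Dd := integRn n (Dtf n p alpha f g)). set (Nn := integRn n (Nf n p f delta1)). set (Mm := integRn n (Nf n p f delta2)).
  assert (HDd: 0 <= Dd).
  { apply (I_nonneg n M); auto. intros x. unfold Dtf. pose proof (rpow_ge0 (Rabs (Bf n f g x)) p). pose proof (rpow_ge0 (normn n x) (-(alpha*p))). nra. }
  assert (HNn: 0 <= Nn).
  { apply (I_nonneg n M); auto. intros x. unfold Nf. pose proof (rpow_ge0 (Rabs (f x)) p). pose proof (rpow_ge0 (normn n x) delta1). nra. }
  assert (HMm: 0 <= Mm).
  { apply (I_nonneg n M); auto. intros x. unfold Nf. pose proof (rpow_ge0 (Rabs (f x)) p). pose proof (rpow_ge0 (normn n x) delta2). nra. }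
  assert (IX1: integRn n (X0f n p f delta1) = 0) by (unfold X0f; eapply div_lemma; eauto).
  assert (KN: K * Nn = - p * integRn n (hf n p f g delta1)).
  { unfold Nn. rewrite <- (I_scal n M) by auto.
    rewrite (I_ext n _ (fun x => 1 * X0f n p f delta1 x + (-p) * hf n p f g delta1 x)).
    rewrite (I_lin n M) by auto. rewrite IX1. ring.
    intros x. unfold K. rewrite PI2_id. ring. }
  assert (Hd2: delta2 = (delta1 + 1 + alpha) * (p/(p-1))) by (unfold delta2, delta1; field; lra).
  assert (StepB: forall eps, 0 < eps -> p * (Rabs K / p) * Nn <= rpow eps p * Dd + (p-1) * rpow (/eps) (p/(p-1)) * Mm).
  { intros eps He.
    assert (GY: Good n M (fun x => rpow eps p * Dtf n p alpha f g x + ((p-1) * rpow (/eps) (p/(p-1))) * Nf n p f delta2 x)) by (apply Good_lin; auto).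
    assert (IY: integRn n (fun x => rpow eps p * Dtf n p alpha f g x + ((p-1) * rpow (/eps) (p/(p-1))) * Nf n p f delta2 x)
               = rpow eps p * Dd + (p-1) * rpow (/eps) (p/(p-1)) * Mm).
    { rewrite (I_lin n M) by auto. fold Dd Mm. ring. }
    assert (B1: integRn n (fun x => p * hf n p f g delta1 x) <= rpow eps p * Dd + (p-1) * rpow (/eps) (p/(p-1)) * Mm).
    { rewrite <- IY. apply (I_mono n M); auto. apply (Good_ext n M (fun x => p * hf n p f g delta1 x + 0 * hf n p f g delta1 x)).
      intros; ring. apply Good_lin; auto.
      intros x. pose proof (PI2_young n p alpha f g delta1 delta2 eps x hp2 He Hd2). pose proof (Rle_abs (p * hf n p f g delta1 x)). lra. }
    assert (B2: integRn n (fun x => (-p) * hf n p f g delta1 x) <= rpow eps p * Dd + (p-1) * rpow (/eps) (p/(p-1)) * Mm).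
    { rewrite <- IY. apply (I_mono n M); auto. apply (Good_ext n M (fun x => (-p) * hf n p f g delta1 x + 0 * hf n p f g delta1 x)).
      intros; ring. apply Good_lin; auto.
      intros x. pose proof (PI2_young n p alpha f g delta1 delta2 eps x hp2 He Hd2).
      pose proof (Rle_abs (- (p * hf n p f g delta1 x))). rewrite Rabs_Ropp in H0. lra. }
    rewrite (I_scal n M) in B1, B2 by auto.
    replace (p * (Rabs K / p) * Nn) with (Rabs (K * Nn)).
    2:{ rewrite Rabs_mult, (Rabs_pos_eq Nn) by auto. field. lra. }
    rewrite KN. apply Rabs_le. lra. }
  assert (HCp: Cp = cp * rpow (Rabs K / p) p).
  { unfold Cp. f_equal. f_equal. replace ((INR n * (p - 1) - p * b) / p ^ 2) with (K / p).
    unfold Rdiv. rewrite Rabs_mult, Rabs_inv, (Rabs_pos_eq p) by lra. auto.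
    unfold K, delta1, g. field. lra. }
  pose proof (final_alg p (Rabs K / p) cp Dd Nn Mm hp2 ltac:(apply Rdiv_le_0_compat; [apply Rabs_pos|lra]) Hc0 HDd HNn HMm StepB) as FA.
  fold Nn Mm. rewrite HCp. apply Rle_ge. fold Dd in StepA. lra.
Qed.
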